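(* Let $Q=\mathrm{diag}(q_1,\dots,q_n)$, $q_i>0$, and let $P^l\in\mathbb{R}^n$ be constant. Define \[ \overline\theta=\frac{\mathbf{1}_n\mathbf{1}_n^TP^l}{\mathbf{1}_n^TQ^{-1}\mathbf{1}_n},\qquad \overline u=Q^{-1}\overline\theta. \] Suppose there exist $\overline\eta\in\mathcal{R}(D^T)\cap(-\frac{\pi}{2},\frac{\pi}{2})^m$ and $\overline V\in\mathbb{R}^n_{>0}$ with $\overline u-P^l=D\Gamma(\overline V)\boldsymbol{\sin}(\overline\eta)$ and $E(\overline\eta)\overline V=\overline E_{fd}$, and that $(\overline\eta,\overline V)$ satisfies condition $(\ast)$. Let $\mathcal{G}^{comm}$ be a connected undirected graph on $\{1,\dots,n\}$ (the communication graph), with neighbour sets $\mathcal{N}_i^{comm}$. Consider the network dynamics in closed loop with the controllers \[ \dot\theta_i=\sum_{j\in\mathcal{N}_i^{comm}}(\theta_j-\theta_i)-q_i^{-1}\omega_i,\qquad u_i=q_i^{-1}\theta_i,\qquad i=1,\dots,n. \] Then there is a neighbourhood of $(\overline\eta,\mathbf{0},\overline V,\overline\theta)$ such that every closed-loop solution starting in it converges asymptotically to the largest invariant set on which $\omega=\mathbf{0}$, $E(\eta)V-\overline E_{fd}=\mathbf{0}$ (so $V$ equals a constant $\tilde V$), and $\theta=\overline\theta$; on this set $\eta$ is a constant $\tilde\eta$ and $\mathbf{0}=\overline u-D\Gamma(\tilde V)\boldsymbol{\sin}(\tilde\eta)-P^l$, $\mathbf{0}=-E(\tilde\eta)\tilde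 V+\overline E_{fd}$. In particular the frequency deviation converges to zero and $u$ converges to the cost-minimizing generation $\overline u$.
   Context: Standing setup (power network model). $\mathcal{G}=(\mathcal{V},\mathcal{E})$ is a connected undirected graph with node set $\{1,\dots,n\}$ and $m$ edges; each edge $k=\{i,j\}$ is given an arbitrary orientation, and $D\in\mathbb{R}^{n\times m}$ is the incidence matrix: $d_{ik}=+1$ if $i$ is the positive end of edge $k$, $-1$ if $i$ is the negative end, $0$ otherwise. $|D|$ denotes the matrix of entrywise absolute values of $D$. $\mathbf{1}_n$ is the all-ones vector. For each edge $k=\{i,j\}$ there is a susceptance $B_{ij}=B_{ji}>0$; each node has a self-susceptance $B_{ii}<0$ with $|B_{ii}|>\sum_{j\in\mathcal{N}_i}|B_{ij}|$ ($\mathcal{N}_i$ the neighbours of $i$ in $\mathcal{G}$), and reactances $X_{di}>X'_{di}>0$. For $V\in\mathbb{R}^n$, $\Gamma(V)=\mathrm{diag}(\gamma_1,\dots,\gamma_m)$ with $\gamma_k=V_iV_jB_{ij}$ for edge $k=\{i,j\}$. For $\eta\in\mathbb{R}^m$, $E(\eta)\in\mathbb{R}^{n\times n}$ is the symmetric matrix with $E_{ii}=\frac{1-B_{ii}(X_{di}-X'_{di})}{X_{di}-X'_{di}}$, $E_{ij}=-B_{ij}\cos(\eta_k)$ if $k=\{i,j\}$ is an edge, and $E_{ij}=0$ otherwise. $\boldsymbol{\sin}$, $\boldsymbol{\cos}$ act componentwise. $M,A,T$ are diagonal positive definite $n\times n$ matrices ($A=\mathrm{diag}(A_i)$), and $\overline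 E_{fd}\in\mathbb{R}^n$ is a constant vector. The network dynamics, with input $u\in\mathbb{R}^n$ (power generation) and demand $P^l$, are \[ \dot\eta=D^T\omega,\quad M\dot\omega=u-D\Gamma(V)\boldsymbol{\sin}(\eta)-A\omega-P^l,\quad T\dot V=-E(\eta)V+\overline E_{fd},\quad y=\omega, \] with state $(\eta,\omega,V)\in\mathbb{R}^m\times\mathbb{R}^n\times\mathbb{R}^n$. Condition $(\ast)$ on $(\overline\eta,\overline V)$: \[ E(\overline\eta)-\mathrm{diag}(\overline V)^{-1}|D|\Gamma(\overline V)\mathrm{diag}(\boldsymbol{\sin}(\overline\eta))\mathrm{diag}(\boldsymbol{\cos}(\overline\eta))^{-1}\mathrm{diag}(\boldsymbol{\sin}(\overline\eta))|D|^T\mathrm{diag}(\overline V)^{-1}>0. \] *)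

(* Defs.v *)
From Stdlib Require Import Reals Lra Lia List Arith.
From Stdlib Require Import Relation_Operators.
Import ListNotations.
Open Scope R_scope.

(* Nodes are 0..n-1, edges are 0..m-1; vectors are functions nat -> R
   (entries outside the index range are irrelevant). *)

Definition sumR (n : nat) (f : nat -> R) : R :=
  fold_right Rplus 0 (map f (seq 0 n)).

(* Power network data.  Edge k is oriented from [src k] (positive end)
   to [dst k] (negative end). *)
Record Net := mkNet {
  nn  : nat;
  mm  : nat;
  src : nat -> nat;
  dst : nat -> nat;
  Bs  : nat -> nat -> R;     (* susceptances B_ij, self-susceptance B_ii *)
  Xd  : nat -> R;
  Xdp : nat -> R;
  Md  : nat -> R;
  Ad  : nat -> R;
  Td  : nat -> R;
  Efd : nat -> R
}.

Definition joins (N : Net) (k i j : nat) : bool :=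
  ((src N k =? i) && (dst N k =? j)) || ((src N k =? j) && (dst N k =? i))%bool.

Definition padj (N : Net) (i j : nat) : bool :=
  existsb (fun k => joins N k i j) (seq 0 (mm N)).

Definition connected (n : nat) (adj : nat -> nat -> bool) : Prop :=
  forall i j, (i < n)%nat -> (j < n)%nat ->
    clos_refl_trans nat (fun a b => (a < n)%nat /\ (b < n)%nat /\ adj a b = true) i j.

Definition Dinc (N : Net) (i k : nat) : R :=
  if i =? src N k then 1 else if i =? dst N k then -1 else 0.

Definition gam (N : Net) (V : nat -> R) (k : nat) : R :=
  V (src N k) * V (dst N k) * Bs N (src N k) (dst N k).

Definition DGs (N : Net) (V eta : nat -> R) (i : nat) : R :=
  sumR (mm N) (fun k => Dinc N i k * gam N V k * sin (eta k)).

Definition Emat (N : Net) (eta : nat -> R) (i j : nat) : R :=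
  if i =? j then (1 - Bs N i i * (Xd N i - Xdp N i)) / (Xd N i - Xdp N i)
  else sumR (mm N) (fun k => if joins N k i j then - Bs N i j * cos (eta k) else 0).

Definition EV (N : Net) (eta V : nat -> R) (i : nat) : R :=
  sumR (nn N) (fun j => Emat N eta i j * V j).

Definition wf_net (N : Net) : Prop :=
  (forall k, (k < mm N)%nat ->
     (src N k < nn N)%nat /\ (dst N k < nn N)%nat /\ src N k <> dst N k) /\
  (forall k l, (k < mm N)%nat -> (l < mm N)%nat -> k <> l ->
     joins N k (src N l) (dst N l) = false) /\
  connected (nn N) (padj N) /\
  (forall k, (k < mm N)%nat ->
     Bs N (src N k) (dst N k) = Bs N (dst N k) (src N k) /\
     0 < Bs N (src N k) (dst N k)) /\
  (forall i, (i < nn N)%nat ->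
     Bs N i i < 0 /\
     Rabs (Bs N i i) >
       sumR (nn N) (fun j => if padj N i j then Rabs (Bs N i j) else 0)) /\
  (forall i, (i < nn N)%nat -> 0 < Xdp N i /\ Xdp N i < Xd N i) /\
  (forall i, (i < nn N)%nat -> 0 < Md N i /\ 0 < Ad N i /\ 0 < Td N i).

(* Condition (ast) : the symmetric matrix
   E(eb) - diag(Vb)^-1 |D| Gamma(Vb) diag(sin eb) diag(cos eb)^-1 diag(sin eb) |D|^T diag(Vb)^-1
   is positive definite. *)
Definition Smat (N : Net) (eb Vb : nat -> R) (i j : nat) : R :=
  Emat N eb i j
  - / Vb i * sumR (mm N) (fun k => Rabs (Dinc N i k) * gam N Vb k * sin (eb k)
                                   * / cos (eb k) * sin (eb k) * Rabs (Dinc N j k))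
    * / Vb j.

Definition posdef (n : nat) (S : nat -> nat -> R) : Prop :=
  forall x : nat -> R, (exists i, (i < n)%nat /\ x i <> 0) ->
    sumR n (fun i => sumR n (fun j => x i * S i j * x j)) > 0.

Definition cond_star (N : Net) (eb Vb : nat -> R) : Prop :=
  posdef (nn N) (Smat N eb Vb).

Record st := mkst { s_eta : nat -> R; s_om : nat -> R; s_V : nat -> R; s_th : nat -> R }.

Definition uctl (q : nat -> R) (s : st) (i : nat) : R := / q i * s_th s i.

Definition rhs (N : Net) (q Pl : nat -> R) (c : nat -> nat -> bool) (s : st) : st :=
  mkst
    (fun k => sumR (nn N) (fun i => Dinc N i k * s_om s i))
    (fun i => / Md N i * (uctl q s i - DGs N (s_V s) (s_eta s) i
                          - Ad N i * s_om s i - Pl i))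
    (fun i => / Td N i * (- EV N (s_eta s) (s_V s) i + Efd N i))
    (fun i => sumR (nn N) (fun j => if c i j then s_th s j - s_th s i else 0)
              - / q i * s_om s i).

Definition solves_at (N : Net) (q Pl : nat -> R) (c : nat -> nat -> bool)
    (x : R -> st) (t : R) : Prop :=
  let f := rhs N q Pl c (x t) in
  (forall k, (k < mm N)%nat -> derivable_pt_lim (fun s => s_eta (x s) k) t (s_eta f k)) /\
  (forall i, (i < nn N)%nat ->
     derivable_pt_lim (fun s => s_om (x s) i) t (s_om f i) /\
     derivable_pt_lim (fun s => s_V (x s) i) t (s_V f i) /\
     derivable_pt_lim (fun s => s_th (x s) i) t (s_th f i)).

Definition sdist (N : Net) (a b : st) : R :=
  sumR (mm N) (fun k => Rabs (s_eta a k - s_eta b k)) +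
  sumR (nn N) (fun i => Rabs (s_om a i - s_om b i) + Rabs (s_V a i - s_V b i)
                        + Rabs (s_th a i - s_th b i)).

Definition fwd_sol (N : Net) (q Pl : nat -> R) (c : nat -> nat -> bool)
    (x : R -> st) : Prop :=
  (forall t, 0 < t -> solves_at N q Pl c x t) /\
  (forall eps, 0 < eps -> exists del, 0 < del /\
     forall t, 0 <= t < del -> sdist N (x t) (x 0) < eps).

Definition full_sol (N : Net) (q Pl : nat -> R) (c : nat -> nat -> bool)
    (x : R -> st) : Prop :=
  forall t, solves_at N q Pl c x t.

Definition invariant (N : Net) (q Pl : nat -> R) (c : nat -> nat -> bool)
    (W : st -> Prop) : Prop :=
  forall x0, W x0 -> exists x, full_sol N q Pl c x /\ x 0 = x0 /\ forall t, W (x t).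

Definition largest_invariant (N : Net) (q Pl : nat -> R) (c : nat -> nat -> bool)
    (Om : st -> Prop) : st -> Prop :=
  fun s => exists W, invariant N q Pl c W /\ (forall y, W y -> Om y) /\ W s.

Definition converges_to_set (N : Net) (x : R -> st) (S : st -> Prop) : Prop :=
  forall eps, 0 < eps -> exists T, forall t, T <= t -> exists y, S y /\ sdist N (x t) y < eps.

Definition converges_to (f : R -> R) (l : R) : Prop :=
  forall eps, 0 < eps -> exists T, forall t, T <= t -> Rabs (f t - l) < eps.

(* thetabar = 1 1^T P^l / (1^T Q^{-1} 1)  (all entries equal) *)
Definition thetabar (n : nat) (q Pl : nat -> R) (i : nat) : R :=
  sumR n Pl / sumR n (fun j => / q j).

Definition ubar (n : nat) (q Pl : nat -> R) (i : nat) : R :=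
  / q i * thetabar n q Pl i.

Definition Omega (N : Net) (q Pl : nat -> R) (s : st) : Prop :=
  forall i, (i < nn N)%nat ->
    s_om s i = 0 /\ EV N (s_eta s) (s_V s) i - Efd N i = 0 /\
    s_th s i = thetabar (nn N) q Pl i.

(* Main.v *)
Require Import Defs.
From Stdlib Require Import Reals Lra Lia List Arith Relation_Operators.
Import ListNotations.
Open Scope R_scope.

Lemma sumR_0 f : sumR 0 f = 0.
Proof. reflexivity. Qed.

Lemma sumR_S n f : sumR (S n) f = sumR n f + f n.
Proof.
  unfold sumR. rewrite seq_S, map_app, fold_right_app. simpl.
  generalize (f n). induction (map f (seq 0 n)) as [|a l IH]; intro r; simpl.
  - lra.
  - rewrite IH. lra.
Qed.

Lemma sumR_ext n f g : (forall i, (i < n)%nat -> f i = g i) -> sumR n f = sumR n g.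
Proof.
  induction n; intro H. reflexivity.
  rewrite !sumR_S, IHn, H; auto; intros; apply H; lia.
Qed.

Lemma sumR_plus n f g : sumR n (fun i => f i + g i) = sumR n f + sumR n g.
Proof. induction n. simpl; unfold sumR; simpl; lra. rewrite !sumR_S, IHn. lra. Qed.

Lemma sumR_minus n f g : sumR n (fun i => f i - g i) = sumR n f - sumR n g.
Proof. induction n. unfold sumR; simpl; lra. rewrite !sumR_S, IHn. lra. Qed.

Lemma sumR_scal n c f : sumR n (fun i => c * f i) = c * sumR n f.
Proof. induction n. unfold sumR; simpl; lra. rewrite !sumR_S, IHn. lra. Qed.

Lemma sumR_opp n f : sumR n (fun i => - f i) = - sumR n f.
Proof. induction n. unfold sumR; simpl; lra. rewrite !sumR_S, IHn. lra. Qed.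

Lemma sumR_zero0 n : sumR n (fun _ => 0) = 0.
Proof. induction n. reflexivity. rewrite sumR_S, IHn; lra. Qed.

Lemma sumR_zero n f : (forall i, (i < n)%nat -> f i = 0) -> sumR n f = 0.
Proof. intro H. rewrite (sumR_ext n f (fun _ => 0)) by auto. apply sumR_zero0. Qed.

Lemma sumR_swap n m (f : nat -> nat -> R) :
  sumR n (fun i => sumR m (fun k => f i k)) = sumR m (fun k => sumR n (fun i => f i k)).
Proof.
  induction n.
  - rewrite sumR_0. symmetry. apply sumR_zero. intros. apply sumR_0.
  - rewrite sumR_S, IHn. rewrite <- sumR_plus. apply sumR_ext. intros. rewrite sumR_S. lra.
Qed.

Lemma sumR_delta n a (f : nat -> R) : (a < n)%nat ->
  sumR n (fun j => if j =? a then f j else 0) = f a.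
Proof.
  induction n; intro H. lia.
  rewrite sumR_S. destruct (Nat.eq_dec a n).
  - subst. rewrite Nat.eqb_refl. rewrite sumR_zero. lra.
    intros. destruct (Nat.eqb_spec i n). lia. auto.
  - rewrite IHn by lia. destruct (Nat.eqb_spec n a). lia. lra.
Qed.

Lemma sumR_delta' n a (f : nat -> R) : (a < n)%nat ->
  sumR n (fun j => if a =? j then f j else 0) = f a.
Proof. intro H. rewrite <- (sumR_delta n a f H). apply sumR_ext. intros.
  rewrite Nat.eqb_sym. auto. Qed.

Lemma sumR_le n f g : (forall i, (i < n)%nat -> f i <= g i) -> sumR n f <= sumR n g.
Proof. induction n; intro H. unfold sumR; simpl; lra.
  rewrite !sumR_S. assert (f n <= g n) by (apply H; lia).
  assert (sumR n f <= sumR n g) by (apply IHn; intros; apply H; lia). lra. Qed.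

Lemma sumR_nonneg n f : (forall i, (i < n)%nat -> 0 <= f i) -> 0 <= sumR n f.
Proof. intro H. replace 0 with (sumR n (fun _ => 0)). apply sumR_le; auto.
  apply sumR_zero; auto. Qed.

Lemma sumR_term n f a : (forall i, (i < n)%nat -> 0 <= f i) -> (a < n)%nat -> f a <= sumR n f.
Proof. induction n; intros H Ha. lia. rewrite sumR_S.
  destruct (Nat.eq_dec a n). subst. assert (0 <= sumR n f) by (apply sumR_nonneg; intros; apply H; lia). lra.
  assert (f a <= sumR n f) by (apply IHn; [intros; apply H|]; lia).
  assert (0 <= f n) by (apply H; lia). lra. Qed.

Lemma sumR_abs n f : Rabs (sumR n f) <= sumR n (fun i => Rabs (f i)).
Proof. induction n. unfold sumR; simpl. rewrite Rabs_R0; lra.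
  rewrite !sumR_S. eapply Rle_trans. apply Rabs_triang. lra. Qed.

Lemma sumR_const_le n f c : (forall i, (i < n)%nat -> f i <= c) -> sumR n f <= INR n * c.
Proof. induction n; intro H. unfold sumR; simpl; lra. rewrite sumR_S, S_INR.
  assert (f n <= c) by (apply H; lia). assert (sumR n f <= INR n * c) by (apply IHn; intros; apply H; lia). lra. Qed.

Lemma fin_min m (f : nat -> R) : (forall k, (k < m)%nat -> 0 < f k) ->
  exists c, 0 < c /\ forall k, (k < m)%nat -> c <= f k.
Proof. induction m; intro H. exists 1; split; [lra| intros; lia].
  destruct IHm as [c [Hc Hk]]. intros; apply H; lia.
  exists (Rmin c (f m)). split. apply Rmin_glb_lt; auto; apply H; lia.
  intros k Hk'. destruct (Nat.eq_dec k m). subst; apply Rmin_r.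
  eapply Rle_trans. apply Rmin_l. apply Hk; lia. Qed.

Lemma fin_max m (f : nat -> R) : exists c, 0 <= c /\ forall k, (k < m)%nat -> f k <= c.
Proof. induction m. exists 0; split; [lra| intros; lia].
  destruct IHm as [c [Hc Hk]].
  exists (Rmax c (f m)). split. eapply Rle_trans; [apply Hc| apply Rmax_l].
  intros k Hk'. destruct (Nat.eq_dec k m). subst; apply Rmax_r.
  eapply Rle_trans. apply Hk; lia. apply Rmax_l. Qed.

Lemma sumR_cv n (a : nat -> nat -> R) (l : nat -> R) :
  (forall i, (i < n)%nat -> Un_cv (fun p => a p i) (l i)) ->
  Un_cv (fun p => sumR n (a p)) (sumR n l).
Proof. induction n; intro H.
  - intros e He. exists 0%nat. intros. unfold Rdist. rewrite !sumR_0. rewrite Rminus_0_r, Rabs_R0. lra.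
  - assert (Un_cv (fun p => sumR n (a p) + a p n) (sumR n l + l n)).
    apply CV_plus. apply IHn; intros; apply H; lia. apply H; lia.
    intros e He. destruct (H0 e He) as [N HN]. exists N. intros. rewrite !sumR_S. apply HN; auto.
Qed.

Lemma Rabs_le_inv' a b : Rabs a <= b -> - b <= a <= b.
Proof. intro H. unfold Rabs in H. destruct (Rcase_abs a); lra. Qed.

From Stdlib Require Import Reals Lra Lia List Arith Relation_Operators IndefiniteDescription ZArith.
Import ListNotations.
Open Scope R_scope.

Lemma sdist_nonneg N a b : 0 <= sdist N a b.
Proof. unfold sdist. assert (H1 := sumR_nonneg (mm N) (fun k => Rabs (s_eta a k - s_eta b k))).
  assert (H2 := sumR_nonneg (nn N) (fun i => Rabs (s_om a i - s_om b i) + Rabs (s_V a i - s_V b i)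
                        + Rabs (s_th a i - s_th b i))).
  assert (0 <= sumR (mm N) (fun k => Rabs (s_eta a k - s_eta b k))) by (apply H1; intros; apply Rabs_pos).
  assert (0 <= sumR (nn N) (fun i => Rabs (s_om a i - s_om b i) + Rabs (s_V a i - s_V b i)
                        + Rabs (s_th a i - s_th b i))). apply H2. intros.
  pose proof (Rabs_pos (s_om a i - s_om b i)). pose proof (Rabs_pos (s_V a i - s_V b i)).
  pose proof (Rabs_pos (s_th a i - s_th b i)). lra. lra. Qed.

Lemma Rabs_tri3 a b c : Rabs (a - c) <= Rabs (a - b) + Rabs (b - c).
Proof. replace (a - c) with ((a - b) + (b - c)) by ring. apply Rabs_triang. Qed.

Lemma sdist_triang N a b c : sdist N a c <= sdist N a b + sdist N b c.
Proof. unfold sdist.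
  assert (sumR (mm N) (fun k => Rabs (s_eta a k - s_eta c k)) <=
     sumR (mm N) (fun k => Rabs (s_eta a k - s_eta b k)) + sumR (mm N) (fun k => Rabs (s_eta b k - s_eta c k))).
  rewrite <- sumR_plus. apply sumR_le. intros; apply Rabs_tri3.
  assert (sumR (nn N) (fun i => Rabs (s_om a i - s_om c i) + Rabs (s_V a i - s_V c i) + Rabs (s_th a i - s_th c i)) <=
   sumR (nn N) (fun i => Rabs (s_om a i - s_om b i) + Rabs (s_V a i - s_V b i) + Rabs (s_th a i - s_th b i)) +
   sumR (nn N) (fun i => Rabs (s_om b i - s_om c i) + Rabs (s_V b i - s_V c i) + Rabs (s_th b i - s_th c i))).
  rewrite <- sumR_plus. apply sumR_le. intros.
  pose proof (Rabs_tri3 (s_om a i) (s_om b i) (s_om c i)).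
  pose proof (Rabs_tri3 (s_V a i) (s_V b i) (s_V c i)).
  pose proof (Rabs_tri3 (s_th a i) (s_th b i) (s_th c i)). lra.
  lra. Qed.

Lemma sdist_sym N a b : sdist N a b = sdist N b a.
Proof. unfold sdist. f_equal; apply sumR_ext; intros.
  apply Rabs_minus_sym. rewrite (Rabs_minus_sym (s_om a i)), (Rabs_minus_sym (s_V a i)), (Rabs_minus_sym (s_th a i)). auto. Qed.

Lemma sdist_eta N a b k : (k < mm N)%nat -> Rabs (s_eta a k - s_eta b k) <= sdist N a b.
Proof. intro. unfold sdist.
  assert (Rabs (s_eta a k - s_eta b k) <= sumR (mm N) (fun k => Rabs (s_eta a k - s_eta b k))).
  apply (sumR_term _ (fun k => Rabs (s_eta a k - s_eta b k))); auto. intros; apply Rabs_pos.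
  assert (0 <= sumR (nn N) (fun i => Rabs (s_om a i - s_om b i) + Rabs (s_V a i - s_V b i) + Rabs (s_th a i - s_th b i))).
  apply sumR_nonneg. intros. pose proof (Rabs_pos (s_om a i - s_om b i)). pose proof (Rabs_pos (s_V a i - s_V b i)).
  pose proof (Rabs_pos (s_th a i - s_th b i)). lra. lra. Qed.

Lemma sdist_node N a b i : (i < nn N)%nat ->
  Rabs (s_om a i - s_om b i) + Rabs (s_V a i - s_V b i) + Rabs (s_th a i - s_th b i) <= sdist N a b.
Proof. intro. unfold sdist.
  assert (0 <= sumR (mm N) (fun k => Rabs (s_eta a k - s_eta b k))).
  apply sumR_nonneg. intros; apply Rabs_pos.
  assert (Rabs (s_om a i - s_om b i) + Rabs (s_V a i - s_V b i) + Rabs (s_th a i - s_th b i) <= sumR (nn N) (fun i => Rabs (s_om a i - s_om b i) + Rabs (s_V a i - s_V b i) + Rabs (s_th a i - s_th b i))).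
  apply (sumR_term _ (fun i => Rabs (s_om a i - s_om b i) + Rabs (s_V a i - s_V b i) + Rabs (s_th a i - s_th b i))); auto.
  intros. pose proof (Rabs_pos (s_om a i0 - s_om b i0)). pose proof (Rabs_pos (s_V a i0 - s_V b i0)).
  pose proof (Rabs_pos (s_th a i0 - s_th b i0)). lra. lra. Qed.

Lemma sdist_om N a b i : (i < nn N)%nat -> Rabs (s_om a i - s_om b i) <= sdist N a b.
Proof. intro H. pose proof (sdist_node N a b i H). pose proof (Rabs_pos (s_V a i - s_V b i)).
  pose proof (Rabs_pos (s_th a i - s_th b i)). lra. Qed.
Lemma sdist_V N a b i : (i < nn N)%nat -> Rabs (s_V a i - s_V b i) <= sdist N a b.
Proof. intro H. pose proof (sdist_node N a b i H). pose proof (Rabs_pos (s_om a i - s_om b i)).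
  pose proof (Rabs_pos (s_th a i - s_th b i)). lra. Qed.
Lemma sdist_th N a b i : (i < nn N)%nat -> Rabs (s_th a i - s_th b i) <= sdist N a b.
Proof. intro H. pose proof (sdist_node N a b i H). pose proof (Rabs_pos (s_V a i - s_V b i)).
  pose proof (Rabs_pos (s_om a i - s_om b i)). lra. Qed.

Lemma sdist_refl N a : sdist N a a = 0.
Proof. unfold sdist. rewrite (sumR_zero (mm N)), (sumR_zero (nn N)). lra.
  intros. rewrite !Rminus_diag, Rabs_R0. lra. intros. rewrite Rminus_diag, Rabs_R0. auto. Qed.

Definition contS N (F : st -> R) (y : st) : Prop :=
  forall e, 0 < e -> exists d, 0 < d /\ forall z, sdist N z y < d -> Rabs (F z - F y) < e.

Lemma contS_const N c y : contS N (fun _ => c) y.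
Proof. intros e He. exists 1. split. lra. intros. rewrite Rminus_diag, Rabs_R0. auto. Qed.

Lemma contS_eta N k y : (k < mm N)%nat -> contS N (fun z => s_eta z k) y.
Proof. intros Hk e He. exists e. split; auto. intros z Hz. pose proof (sdist_eta N z y k Hk). lra. Qed.
Lemma contS_om N i y : (i < nn N)%nat -> contS N (fun z => s_om z i) y.
Proof. intros Hk e He. exists e. split; auto. intros z Hz. pose proof (sdist_om N z y i Hk). lra. Qed.
Lemma contS_V N i y : (i < nn N)%nat -> contS N (fun z => s_V z i) y.
Proof. intros Hk e He. exists e. split; auto. intros z Hz. pose proof (sdist_V N z y i Hk). lra. Qed.
Lemma contS_th N i y : (i < nn N)%nat -> contS N (fun z => s_th z i) y.
Proof. intros Hk e He. exists e. split; auto. intros z Hz. pose proof (sdist_th N z y i Hk). lra. Qed.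

Lemma contS_plus N F G y : contS N F y -> contS N G y -> contS N (fun z => F z + G z) y.
Proof. intros HF HG e He. destruct (HF (e/2)) as [d1 [Hd1 H1]]. lra. destruct (HG (e/2)) as [d2 [Hd2 H2]]. lra.
  exists (Rmin d1 d2). split. apply Rmin_glb_lt; auto. intros z Hz.
  assert (sdist N z y < d1) by (eapply Rlt_le_trans; [apply Hz| apply Rmin_l]).
  assert (sdist N z y < d2) by (eapply Rlt_le_trans; [apply Hz| apply Rmin_r]).
  specialize (H1 z H). specialize (H2 z H0).
  replace (F z + G z - (F y + G y)) with ((F z - F y) + (G z - G y)) by ring.
  eapply Rle_lt_trans. apply Rabs_triang. lra. Qed.

Lemma contS_opp N F y : contS N F y -> contS N (fun z => - F z) y.
Proof. intros HF e He. destruct (HF e He) as [d [Hd H]]. exists d. split; auto. intros z Hz.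
  replace (- F z - - F y) with (- (F z - F y)) by ring. rewrite Rabs_Ropp. auto. Qed.

Lemma contS_minus N F G y : contS N F y -> contS N G y -> contS N (fun z => F z - G z) y.
Proof. intros. apply contS_plus; auto. apply contS_opp; auto. Qed.

Lemma contS_mult N F G y : contS N F y -> contS N G y -> contS N (fun z => F z * G z) y.
Proof. intros HF HG e He.
  set (a := Rabs (F y)). set (b := Rabs (G y)).
  assert (Ha : 0 <= a) by apply Rabs_pos. assert (Hb : 0 <= b) by apply Rabs_pos.
  set (e1 := Rmin 1 (e / (2 * (b + 1)))). set (e2 := e / (2 * (a + 2))).
  assert (He1 : 0 < e1). apply Rmin_glb_lt. lra. apply Rdiv_lt_0_compat; lra.
  assert (He2 : 0 < e2). apply Rdiv_lt_0_compat; lra.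
  destruct (HF e1 He1) as [d1 [Hd1 H1]]. destruct (HG e2 He2) as [d2 [Hd2 H2]].
  exists (Rmin d1 d2). split. apply Rmin_glb_lt; auto. intros z Hz.
  assert (sdist N z y < d1) by (eapply Rlt_le_trans; [apply Hz| apply Rmin_l]).
  assert (sdist N z y < d2) by (eapply Rlt_le_trans; [apply Hz| apply Rmin_r]).
  specialize (H1 z H). specialize (H2 z H0).
  replace (F z * G z - F y * G y) with ((F z - F y) * G y + F z * (G z - G y)) by ring.
  eapply Rle_lt_trans. apply Rabs_triang. rewrite !Rabs_mult.
  assert (Rabs (F z - F y) <= 1) by (pose proof (Rmin_l 1 (e / (2 * (b + 1)))); fold e1 in H3; lra).
  assert (Rabs (F z - F y) <= e / (2 * (b + 1))) by (pose proof (Rmin_r 1 (e / (2 * (b + 1)))); fold e1 in H4; lra).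
  assert (Rabs (F z) <= a + 1). replace (F z) with ((F z - F y) + F y) by ring.
  eapply Rle_trans. apply Rabs_triang. fold a. lra.
  assert (Rabs (F z - F y) * b <= e / (2 * (b + 1)) * b). apply Rmult_le_compat_r; lra.
  assert (e / (2 * (b + 1)) * b <= e / 2).
  { unfold Rdiv. rewrite Rinv_mult. replace (e * (/ 2 * / (b + 1)) * b) with (e/2 * (b / (b+1))) by (field; lra).
    assert (b / (b+1) <= 1). apply (Rmult_le_reg_r (b+1)). lra. unfold Rdiv. rewrite Rmult_assoc, Rinv_l by lra. lra.
    assert (0 <= e/2) by lra. nra. }
  assert (Rabs (F z) * Rabs (G z - G y) <= (a + 1) * e2).
  apply Rmult_le_compat; try apply Rabs_pos; lra.
  assert ((a+1) * e2 < e / 2). unfold e2. unfold Rdiv. rewrite Rinv_mult.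
  replace ((a + 1) * (e * (/ 2 * / (a + 2)))) with (e/2 * ((a+1)/(a+2))) by (field; lra).
  assert ((a+1)/(a+2) < 1). apply (Rmult_lt_reg_r (a+2)). lra. unfold Rdiv. rewrite Rmult_assoc, Rinv_l by lra. lra.
  assert (0 < e/2) by lra. nra.
  fold b. lra. Qed.

Lemma contS_comp N (g : R -> R) F y : contS N F y -> continuity_pt g (F y) -> contS N (fun z => g (F z)) y.
Proof. intros HF Hg e He. destruct (Hg e He) as [al [Hal H]].
  destruct (HF al Hal) as [d [Hd H2]]. exists d. split; auto. intros z Hz.
  destruct (Req_dec (F z) (F y)) as [E|E]. rewrite E, Rminus_diag, Rabs_R0; auto.
  apply (H (F z)). split. split. constructor. auto. apply H2; auto. Qed.

Lemma contS_sin N F y : contS N F y -> contS N (fun z => sin (F z)) y.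
Proof. intro. apply contS_comp; auto. apply continuity_sin. Qed.
Lemma contS_cos N F y : contS N F y -> contS N (fun z => cos (F z)) y.
Proof. intro. apply contS_comp; auto. apply continuity_cos. Qed.
Lemma contS_sqr N F y : contS N F y -> contS N (fun z => (F z)^2) y.
Proof. intro. simpl. apply contS_mult; auto. apply contS_mult; auto. apply contS_const. Qed.

Lemma contS_sumR N n (F : nat -> st -> R) y : (forall i, (i < n)%nat -> contS N (F i) y) ->
  contS N (fun z => sumR n (fun i => F i z)) y.
Proof. induction n; intro H.
  - unfold sumR; simpl. apply contS_const.
  - assert (IH : contS N (fun z => sumR n (fun i => F i z)) y) by (apply IHn; intros; apply H; lia).
    eapply (contS_plus N (fun z => sumR n (fun i => F i z)) (F n)) in IH.
    intros e He. destruct (IH e He) as [d [Hd Hz]]. exists d; split; auto. intros. rewrite !sumR_S. apply Hz; auto.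
    apply H; lia. Qed.

Lemma contS_ext N F G y : (forall z, F z = G z) -> contS N F y -> contS N G y.
Proof. intros E H e He. destruct (H e He) as [d [Hd H']]. exists d. split; auto. intros. rewrite <- !E. auto. Qed.

Definition incr (phi : nat -> nat) := forall k, (phi k < phi (S k))%nat.

Lemma incr_ge phi : incr phi -> forall k, (k <= phi k)%nat.
Proof. intros H k. induction k. lia. specialize (H k). lia. Qed.

Lemma incr_mono phi : incr phi -> forall k l, (k <= l)%nat -> (phi k <= phi l)%nat.
Proof. intros H k l Hkl. induction Hkl. lia. specialize (H m). lia. Qed.

Lemma incr_comp phi psi : incr phi -> incr psi -> incr (fun k => phi (psi k)).
Proof. intros H1 H2 k. assert (psi (S k) >= S (psi k))%nat by (apply H2).
  assert (phi (S (psi k)) <= phi (psi (S k)))%nat by (apply incr_mono; auto). specialize (H1 (psi k)). lia. Qed.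

Lemma cv_subseq u l phi : incr phi -> Un_cv u l -> Un_cv (fun k => u (phi k)) l.
Proof. intros Hp H e He. destruct (H e He) as [N HN]. exists N. intros. apply HN.
  pose proof (incr_ge phi Hp n). lia. Qed.

Fixpoint sb (g : nat -> nat -> nat) (k : nat) : nat :=
  match k with 0 => g 0%nat 0%nat | S k' => g (S (sb g k')) k end.
Lemma sb_S g k : sb g (S k) = g (S (sb g k)) (S k).
Proof. reflexivity. Qed.

Lemma bw1 (u : nat -> R) C : (forall p, Rabs (u p) <= C) ->
  exists l phi, incr phi /\ Un_cv (fun k => u (phi k)) l.
Proof. intro HC.
  destruct (Bolzano_Weierstrass u (fun c => -C <= c <= C) (compact_P3 (-C) C)) as [l Hl].
  intro p. specialize (HC p). apply Rabs_le_inv' in HC. lra.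
  assert (G : forall (M : nat) (k : nat), {p : nat | (M <= p)%nat /\ Rabs (u p - l) < / INR (S k)}).
  { intros M k. apply constructive_indefinite_description.
    assert (0 < / INR (S k)). apply Rinv_0_lt_compat. apply lt_0_INR. lia.
    destruct (Hl (disc l (mkposreal _ H)) M) as [p [Hp1 Hp2]].
    exists (mkposreal _ H). intros x Hx. auto. exists p. split; auto. }
  exists l.
  set (g := fun M k => proj1_sig (G M k)).
  assert (Hg : forall M k, (M <= g M k)%nat /\ Rabs (u (g M k) - l) < / INR (S k)).
  { intros. unfold g. apply (proj2_sig (G M k)). }
  clearbody g.
  exists (sb g). split.
  - intro k. rewrite sb_S. destruct (Hg (S (sb g k)) (S k)). lia.
  - intros e He. destruct (archimed (/ e)) as [Ha _].
    assert (0 < / e) by (apply Rinv_0_lt_compat; lra).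
    exists (Z.to_nat (up (/ e))). intros k Hk. unfold Rdist.
    assert (Rabs (u (sb g k) - l) < / INR (S k)).
    { destruct k. apply Hg. rewrite sb_S. apply Hg. }
    eapply Rlt_le_trans. apply H0.
    assert (IZR (up (/ e)) <= INR k).
    { assert (0 <= up (/e))%Z. apply le_IZR. lra.
      rewrite <- (Z2Nat.id (up (/e))) by auto. rewrite <- INR_IZR_INZ. apply le_INR. lia. }
    assert (0 < INR (S k)) by (apply lt_0_INR; lia).
    rewrite S_INR in *. rewrite <- (Rinv_inv e). apply Rinv_le_contravar. apply Rinv_0_lt_compat. lra. lra.
Qed.

Lemma bwN (a : nat -> nat -> R) C n : (forall p j, (j < n)%nat -> Rabs (a p j) <= C) ->
  exists phi y, incr phi /\ forall j, (j < n)%nat -> Un_cv (fun k => a (phi k) j) (y j).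
Proof. revert a. induction n; intros a H.
  - exists (fun k => k), (fun _ => 0). split. intro; lia. intros; lia.
  - destruct (IHn a) as [phi [y [Hp Hy]]]. intros; apply H; lia.
    destruct (bw1 (fun k => a (phi k) n) C) as [l [psi [Hpsi Hl]]]. intros; apply H; lia.
    exists (fun k => phi (psi k)), (fun j => if j =? n then l else y j). split. apply incr_comp; auto.
    intros j Hj. destruct (Nat.eqb_spec j n). subst. auto.
    apply (cv_subseq (fun k => a (phi k) j)); auto. apply Hy. lia. Qed.

Definition bnd_st N C (z : st) : Prop :=
  (forall k, (k < mm N)%nat -> Rabs (s_eta z k) <= C) /\
  (forall i, (i < nn N)%nat -> Rabs (s_om z i) <= C /\ Rabs (s_V z i) <= C /\ Rabs (s_th z i) <= C).

Lemma bw_st N C (z : nat -> st) : (forall p, bnd_st N C (z p)) ->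
  exists y, forall e, 0 < e -> forall M, exists p, (M <= p)%nat /\ sdist N (z p) y < e.
Proof. intro H.
  destruct (bwN (fun p => s_eta (z p)) C (mm N)) as [p1 [y1 [H1 C1]]]. intros; apply H; auto.
  destruct (bwN (fun k => s_om (z (p1 k))) C (nn N)) as [p2 [y2 [H2 C2]]]. intros; apply H; auto.
  destruct (bwN (fun k => s_V (z (p1 (p2 k)))) C (nn N)) as [p3 [y3 [H3 C3]]]. intros; apply H; auto.
  destruct (bwN (fun k => s_th (z (p1 (p2 (p3 k))))) C (nn N)) as [p4 [y4 [H4 C4]]]. intros; apply H; auto.
  set (phi := fun k => p1 (p2 (p3 (p4 k)))).
  assert (Hphi : incr phi). unfold phi. apply (incr_comp p1 (fun k => p2 (p3 (p4 k)))); auto. apply (incr_comp p2 (fun k => p3 (p4 k))); auto. apply (incr_comp p3 p4); auto.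
  exists (mkst y1 y2 y3 y4).
  assert (Hcv : Un_cv (fun k => sdist N (z (phi k)) (mkst y1 y2 y3 y4)) (0 + 0)).
  { unfold sdist. simpl. apply CV_plus.
    - replace 0 with (sumR (mm N) (fun _ => 0)) by apply sumR_zero0.
      apply (sumR_cv (mm N) (fun k j => Rabs (s_eta (z (phi k)) j - y1 j))). intros j Hj.
      intros e He. assert (Hc := cv_subseq _ _ (fun k => p2 (p3 (p4 k))) ltac:(apply (incr_comp p2 (fun k => p3 (p4 k))); auto; apply (incr_comp p3 p4); auto) (C1 j Hj) e He).
      destruct Hc as [M HM]. exists M. intros. unfold Rdist in *. rewrite Rminus_0_r, Rabs_Rabsolu. apply HM; auto.
    - replace 0 with (sumR (nn N) (fun _ => 0)) by apply sumR_zero0.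
      apply (sumR_cv (nn N) (fun k i => Rabs (s_om (z (phi k)) i - y2 i) + Rabs (s_V (z (phi k)) i - y3 i) + Rabs (s_th (z (phi k)) i - y4 i))).
      intros j Hj. replace 0 with (0 + 0 + 0) by ring.
      assert (A : forall u l, Un_cv u l -> Un_cv (fun k => Rabs (u k - l)) 0).
      { intros u l Hu e He. destruct (Hu e He) as [M HM]. exists M. intros. unfold Rdist in *. rewrite Rminus_0_r, Rabs_Rabsolu. auto. }
      apply CV_plus. apply CV_plus.
      + apply A. apply (cv_subseq (fun k => s_om (z (p1 (p2 k))) j) _ (fun k => p3 (p4 k))). apply (incr_comp p3 p4); auto. apply C2; auto.
      + apply A. apply (cv_subseq (fun k => s_V (z (p1 (p2 (p3 k)))) j) _ p4); auto.
      + apply A. apply C4; auto. }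
  intros e He M. destruct (Hcv e He) as [K HK]. exists (phi (max M K)). split.
  pose proof (incr_ge phi Hphi (max M K)). lia.
  specialize (HK (max M K) ltac:(lia)). unfold Rdist in HK. rewrite Rplus_0_r, Rminus_0_r in HK.
  pose proof (Rle_abs (sdist N (z (phi (Nat.max M K))) (mkst y1 y2 y3 y4))). lra. Qed.

From Stdlib Require Import Reals Lra Lia List Arith Relation_Operators.
Import ListNotations.
Open Scope R_scope.

Lemma D_ext f t a b : derivable_pt_lim f t a -> a = b -> derivable_pt_lim f t b.
Proof. intros; subst; auto. Qed.
Lemma D_fext f g t a : (forall s, f s = g s) -> derivable_pt_lim f t a -> derivable_pt_lim g t a.
Proof. intros E H. replace g with f; auto. apply FunctionalExtensionality.functional_extensionality; auto. Qed.
Lemma D_const c t : derivable_pt_lim (fun _ => c) t 0.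
Proof. apply derivable_pt_lim_const. Qed.
Lemma D_plus f g t a b : derivable_pt_lim f t a -> derivable_pt_lim g t b ->
  derivable_pt_lim (fun s => f s + g s) t (a + b).
Proof. intros. apply (derivable_pt_lim_plus f g); auto. Qed.
Lemma D_minus f g t a b : derivable_pt_lim f t a -> derivable_pt_lim g t b ->
  derivable_pt_lim (fun s => f s - g s) t (a - b).
Proof. intros. apply (derivable_pt_lim_minus f g); auto. Qed.
Lemma D_mult f g t a b : derivable_pt_lim f t a -> derivable_pt_lim g t b ->
  derivable_pt_lim (fun s => f s * g s) t (a * g t + f t * b).
Proof. intros. apply (derivable_pt_lim_mult f g); auto. Qed.
Lemma D_scal c f t a : derivable_pt_lim f t a -> derivable_pt_lim (fun s => c * f s) t (c * a).
Proof. intro H. eapply D_ext. apply D_mult. apply D_const. apply H. cbv beta. ring. Qed.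
Lemma D_opp f t a : derivable_pt_lim f t a -> derivable_pt_lim (fun s => - f s) t (- a).
Proof. intro H. apply (derivable_pt_lim_opp f); auto. Qed.
Lemma D_sin f t a : derivable_pt_lim f t a -> derivable_pt_lim (fun s => sin (f s)) t (cos (f t) * a).
Proof. intro H. apply (derivable_pt_lim_comp f sin); auto. apply derivable_pt_lim_sin. Qed.
Lemma D_cos f t a : derivable_pt_lim f t a -> derivable_pt_lim (fun s => cos (f s)) t (- sin (f t) * a).
Proof. intro H. apply (derivable_pt_lim_comp f cos); auto. apply derivable_pt_lim_cos. Qed.
Lemma D_sq f t a : derivable_pt_lim f t a -> derivable_pt_lim (fun s => (f s)^2) t (2 * f t * a).
Proof. intro H. eapply D_fext. 2:{ eapply D_ext. apply (D_mult f f); eauto. ring. }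
  intros; simpl; ring. Qed.
Lemma D_sumR n (F : nat -> R -> R) (F' : nat -> R) t :
  (forall i, (i < n)%nat -> derivable_pt_lim (F i) t (F' i)) ->
  derivable_pt_lim (fun s => sumR n (fun i => F i s)) t (sumR n F').
Proof. induction n; intro H.
  - unfold sumR; simpl. apply D_const.
  - eapply D_fext. intro s. symmetry. apply sumR_S. rewrite sumR_S. apply D_plus.
    apply IHn; intros; apply H; lia. apply H; lia. Qed.

Definition Bk (N : Net) k := Bs N (src N k) (dst N k).
Definition ediag (N : Net) i := (1 - Bs N i i * (Xd N i - Xdp N i)) / (Xd N i - Xdp N i).

Lemma Emat_diag N eta i : Emat N eta i i = ediag N i.
Proof. unfold Emat. rewrite Nat.eqb_refl. reflexivity. Qed.

Definition edgeU (N : Net) (eb Vb eta V : nat -> R) k :=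
  Bk N k * ( - V (src N k) * V (dst N k) * cos (eta k) + Vb (src N k) * Vb (dst N k) * cos (eb k)
   - Vb (src N k) * Vb (dst N k) * sin (eb k) * (eta k - eb k)
   + cos (eb k) * (Vb (dst N k) * (V (src N k) - Vb (src N k)) + Vb (src N k) * (V (dst N k) - Vb (dst N k)))).

Definition Ubar (N : Net) (eb Vb eta V : nat -> R) :=
  sumR (nn N) (fun i => /2 * ediag N i * (V i - Vb i)^2) + sumR (mm N) (edgeU N eb Vb eta V).

Definition Hf (N : Net) (eb Vb : nat -> R) (thb : R) (z : st) :=
  sumR (nn N) (fun i => /2 * Md N i * (s_om z i)^2) + sumR (nn N) (fun i => /2 * (s_th z i - thb)^2)
  + Ubar N eb Vb (s_eta z) (s_V z).

Definition Dis (N : Net) (c : nat -> nat -> bool) (z : st) :=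
  sumR (nn N) (fun i => Ad N i * (s_om z i)^2)
  + sumR (nn N) (fun i => / Td N i * (EV N (s_eta z) (s_V z) i - Efd N i)^2)
  + /2 * sumR (nn N) (fun i => sumR (nn N) (fun j => if c i j then (s_th z j - s_th z i)^2 else 0)).

Definition Dv (N : Net) (eb Vb : nat -> R) (thb : R) (z f : st) :=
  sumR (nn N) (fun i => Md N i * s_om z i * s_om f i) + sumR (nn N) (fun i => (s_th z i - thb) * s_th f i)
  + (sumR (nn N) (fun i => ediag N i * (s_V z i - Vb i) * s_V f i)
     + sumR (mm N) (fun k => Bk N k * (
        - (s_V f (src N k) * s_V z (dst N k) + s_V z (src N k) * s_V f (dst N k)) * cos (s_eta z k)
        + s_V z (src N k) * s_V z (dst N k) * sin (s_eta z k) * s_eta f k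
        - Vb (src N k) * Vb (dst N k) * sin (eb k) * s_eta f k
        + cos (eb k) * (Vb (dst N k) * s_V f (src N k) + Vb (src N k) * s_V f (dst N k))))).

Definition wf_edges (N : Net) := forall k, (k < mm N)%nat ->
  (src N k < nn N)%nat /\ (dst N k < nn N)%nat /\ src N k <> dst N k.

Lemma Hf_deriv N eb Vb thb (x : R -> st) (f : st) t :
  wf_edges N ->
  (forall k, (k < mm N)%nat -> derivable_pt_lim (fun s => s_eta (x s) k) t (s_eta f k)) ->
  (forall i, (i < nn N)%nat ->
     derivable_pt_lim (fun s => s_om (x s) i) t (s_om f i) /\
     derivable_pt_lim (fun s => s_V (x s) i) t (s_V f i) /\
     derivable_pt_lim (fun s => s_th (x s) i) t (s_th f i)) ->
  derivable_pt_lim (fun s => Hf N eb Vb thb (x s)) t (Dv N eb Vb thb (x t) f).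
Proof. intros Hw He Hn. unfold Hf, Ubar, Dv. repeat apply D_plus.
  - apply D_sumR. intros i Hi. destruct (Hn i Hi) as [H1 _]. eapply D_ext. apply D_scal. apply D_sq. apply H1. cbv beta; field.
  - apply D_sumR. intros i Hi. destruct (Hn i Hi) as [_ [_ H1]]. eapply D_ext. apply D_scal. apply D_sq.
    apply D_minus. apply H1. apply D_const. cbv beta; field.
  - apply D_sumR. intros i Hi. destruct (Hn i Hi) as [_ [H1 _]]. eapply D_ext. apply D_scal. apply D_sq.
    apply D_minus. apply H1. apply D_const. cbv beta; field.
  - apply D_sumR. intros k Hk. destruct (Hw k Hk) as [Hs [Hd _]].
    destruct (Hn _ Hs) as [_ [Vs _]]. destruct (Hn _ Hd) as [_ [Vd _]]. specialize (He k Hk).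
    unfold edgeU. eapply D_ext. apply D_scal. apply D_plus; [apply D_minus; [apply D_plus|]|].
    + apply D_mult. apply D_mult. apply D_opp. apply Vs. apply Vd. apply D_cos. apply He.
    + apply D_const.
    + apply D_scal. apply D_minus. apply He. apply D_const.
    + apply D_scal. apply D_plus. apply D_scal. apply D_minus. apply Vs. apply D_const.
      apply D_scal. apply D_minus. apply Vd. apply D_const.
    + cbv beta; ring.
Qed.

From Stdlib Require Import Reals Lra Lia List Arith Relation_Operators.
Import ListNotations.
Open Scope R_scope.

Definition sym_edges (N : Net) := forall k, (k < mm N)%nat ->
  Bs N (src N k) (dst N k) = Bs N (dst N k) (src N k).

Lemma sumR_if_out n (b : nat -> bool) m (g : nat -> nat -> R) :
  sumR n (fun j => if b j then 0 else sumR m (g j)) = sumR m (fun k => sumR n (fun j => if b j then 0 else g j k)).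
Proof. rewrite <- sumR_swap. apply sumR_ext. intros. destruct (b i). symmetry; apply sumR_zero0. auto. Qed.

Lemma EV_formula N eta V i : wf_edges N -> sym_edges N -> (i < nn N)%nat ->
  EV N eta V i = ediag N i * V i + sumR (mm N) (fun k =>
     (if src N k =? i then - Bk N k * cos (eta k) * V (dst N k) else 0)
   + (if dst N k =? i then - Bk N k * cos (eta k) * V (src N k) else 0)).
Proof. intros Hw Hs Hi. unfold EV.
  transitivity (sumR (nn N) (fun j => (if j =? i then ediag N i * V j else 0) +
     (if i =? j then 0 else sumR (mm N) (fun k => if joins N k i j then - Bs N i j * cos (eta k) * V j else 0)))).
  { apply sumR_ext. intros j Hj. unfold Emat. destruct (Nat.eqb_spec i j); destruct (Nat.eqb_spec j i); try lia.
    subst. unfold ediag. ring. rewrite Rplus_0_l. rewrite Rmult_comm, <- sumR_scal. apply sumR_ext. intros k _.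
    destruct (joins N k i j); ring. }
  rewrite sumR_plus, sumR_delta by auto. f_equal.
  rewrite (sumR_if_out (nn N) (fun j => i =? j) (mm N) (fun j k => if joins N k i j then - Bs N i j * cos (eta k) * V j else 0)).
  apply sumR_ext. intros k Hk. destruct (Hw k Hk) as [Hs1 [Hd1 Hne]]. specialize (Hs k Hk).
  transitivity (sumR (nn N) (fun j => (if j =? dst N k then (if src N k =? i then - Bk N k * cos (eta k) * V (dst N k) else 0) else 0)
     + (if j =? src N k then (if dst N k =? i then - Bk N k * cos (eta k) * V (src N k) else 0) else 0))).
  { apply sumR_ext. intros j Hj. unfold joins, Bk.
    destruct (Nat.eqb_spec i j); destruct (Nat.eqb_spec j (dst N k)); destruct (Nat.eqb_spec (src N k) i);
    destruct (Nat.eqb_spec j (src N k)); destruct (Nat.eqb_spec (dst N k) i);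
    destruct (Nat.eqb_spec (src N k) j); destruct (Nat.eqb_spec (dst N k) j);
    simpl; subst; try lia; try ring; try (rewrite Hs; ring). }
  rewrite sumR_plus, !sumR_delta by auto. auto. Qed.

Lemma reindex N (a f g : nat -> R) : wf_edges N ->
  sumR (nn N) (fun i => a i * sumR (mm N) (fun k => (if src N k =? i then f k else 0) + (if dst N k =? i then g k else 0)))
  = sumR (mm N) (fun k => a (src N k) * f k + a (dst N k) * g k).
Proof. intro Hw. transitivity (sumR (nn N) (fun i => sumR (mm N) (fun k => a i * ((if src N k =? i then f k else 0) + (if dst N k =? i then g k else 0))))).
  apply sumR_ext. intros. rewrite sumR_scal. auto.
  rewrite sumR_swap. apply sumR_ext. intros k Hk. destruct (Hw k Hk) as [H1 [H2 _]].
  transitivity (sumR (nn N) (fun i => (if src N k =? i then a i * f k else 0) + (if dst N k =? i then a i * g k else 0))).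
  apply sumR_ext. intros. destruct (src N k =? i), (dst N k =? i); ring.
  rewrite sumR_plus, !sumR_delta' by auto. auto. Qed.

Lemma theta_lemma n (c : nat -> nat -> bool) (th : nat -> R) thb : (forall i j, c i j = c j i) ->
  sumR n (fun i => (th i - thb) * sumR n (fun j => if c i j then th j - th i else 0))
  = - / 2 * sumR n (fun i => sumR n (fun j => if c i j then (th j - th i)^2 else 0)).
Proof. intro Hc.
  set (S := sumR n (fun i => (th i - thb) * sumR n (fun j => if c i j then th j - th i else 0))).
  assert (E1 : S = sumR n (fun i => sumR n (fun j => if c i j then (th i - thb) * (th j - th i) else 0))).
  { unfold S. apply sumR_ext. intros. rewrite <- sumR_scal. apply sumR_ext. intros. destruct (c i i0); ring. }
  assert (E2 : S = sumR n (fun i => sumR n (fun j => if c i j then (th j - thb) * (th i - th j) else 0))).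
  { rewrite E1, sumR_swap. apply sumR_ext. intros. apply sumR_ext. intros. rewrite Hc. auto. }
  assert (2 * S = - sumR n (fun i => sumR n (fun j => if c i j then (th j - th i)^2 else 0))).
  { replace (2 * S) with (S + S) by ring. rewrite E1 at 1. rewrite E2. rewrite <- sumR_plus, <- sumR_opp.
    apply sumR_ext. intros. rewrite <- sumR_plus, <- sumR_opp. apply sumR_ext. intros. destruct (c i i0); ring. }
  lra. Qed.

Lemma Dv_rhs N q Pl c eb Vb thb (z : st) :
  wf_edges N -> sym_edges N ->
  (forall i, (i < nn N)%nat -> Md N i <> 0) ->
  (forall i, (i < nn N)%nat -> Td N i <> 0) ->
  (forall i, (i < nn N)%nat -> q i <> 0) ->
  (forall i j, c i j = c j i) ->
  (forall i, (i < nn N)%nat -> / q i * thb - Pl i = DGs N Vb eb i) ->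
  (forall i, (i < nn N)%nat -> EV N eb Vb i = Efd N i) ->
  Dv N eb Vb thb z (rhs N q Pl c z) = - Dis N c z.
Proof. intros Hw Hs HM HT Hq Hc Hu HE. unfold Dv, Dis.
  set (eta := s_eta z). set (om := s_om z). set (V := s_V z). set (th := s_th z). set (f := rhs N q Pl c z).
  set (F := fun k => Bk N k * (- V (dst N k) * cos (eta k) + cos (eb k) * Vb (dst N k))).
  set (G := fun k => Bk N k * (- V (src N k) * cos (eta k) + cos (eb k) * Vb (src N k))).
  set (W := fun k => gam N V k * sin (eta k) - gam N Vb k * sin (eb k)).
  assert (Eedge : sumR (mm N) (fun k => Bk N k * (
        - (s_V f (src N k) * V (dst N k) + V (src N k) * s_V f (dst N k)) * cos (eta k)
        + V (src N k) * V (dst N k) * sin (eta k) * s_eta f k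
        - Vb (src N k) * Vb (dst N k) * sin (eb k) * s_eta f k
        + cos (eb k) * (Vb (dst N k) * s_V f (src N k) + Vb (src N k) * s_V f (dst N k))))
     = sumR (mm N) (fun k => s_V f (src N k) * F k + s_V f (dst N k) * G k) + sumR (mm N) (fun k => s_eta f k * W k)).
  { rewrite <- sumR_plus. apply sumR_ext. intros. unfold F, G, W, gam, Bk. ring. }
  rewrite Eedge. clear Eedge.
  rewrite <- (reindex N (s_V f)) by auto.
  assert (Eeta : sumR (mm N) (fun k => s_eta f k * W k) = sumR (nn N) (fun i => om i * (DGs N V eta i - DGs N Vb eb i))).
  { unfold f, rhs. simpl. transitivity (sumR (mm N) (fun k => sumR (nn N) (fun i => om i * (Dinc N i k * W k)))).
    apply sumR_ext. intros. rewrite Rmult_comm, <- sumR_scal. apply sumR_ext. intros. unfold om. ring.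
    rewrite <- sumR_swap. apply sumR_ext. intros. rewrite sumR_scal. unfold DGs. rewrite <- sumR_minus.
    f_equal. apply sumR_ext. intros. unfold W. ring. }
  rewrite Eeta. clear Eeta.
  assert (EVd : forall i, (i < nn N)%nat -> EV N eta V i - Efd N i = ediag N i * (V i - Vb i) +
      sumR (mm N) (fun k => (if src N k =? i then F k else 0) + (if dst N k =? i then G k else 0))).
  { intros i Hi. rewrite <- (HE i Hi). rewrite !EV_formula by auto.
    transitivity (ediag N i * (V i - Vb i) + sumR (mm N) (fun k =>
     ((if src N k =? i then - Bk N k * cos (eta k) * V (dst N k) else 0)
   + (if dst N k =? i then - Bk N k * cos (eta k) * V (src N k) else 0)) -
     ((if src N k =? i then - Bk N k * cos (eb k) * Vb (dst N k) else 0)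
   + (if dst N k =? i then - Bk N k * cos (eb k) * Vb (src N k) else 0)))).
    rewrite sumR_minus. ring. f_equal. apply sumR_ext. intros. unfold F, G.
    destruct (src N i0 =? i), (dst N i0 =? i); ring. }
  transitivity (sumR (nn N) (fun i => - (Ad N i * om i ^2) - / Td N i * (EV N eta V i - Efd N i) ^ 2
      + (th i - thb) * sumR (nn N) (fun j => if c i j then th j - th i else 0))).
  2:{ rewrite sumR_plus, sumR_minus, sumR_opp, theta_lemma by auto. unfold eta, V, th, om. ring. }
  rewrite <- !sumR_plus. apply sumR_ext. intros i Hi.
  unfold f, rhs, uctl. simpl. fold eta om V th.
  pose proof (EVd i Hi) as E. 
  set (X := sumR (mm N) (fun k => (if src N k =? i then F k else 0) + (if dst N k =? i then G k else 0))) in *.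
  replace X with (EV N eta V i - Efd N i - ediag N i * (V i - Vb i)) by lra.
  rewrite <- (Hu i Hi). specialize (HM i Hi). specialize (HT i Hi). specialize (Hq i Hi). field. auto.
Qed.

From Stdlib Require Import Reals Lra Lia List Arith Relation_Operators.
Import ListNotations.
Open Scope R_scope.

Lemma PI_gt1 : 1 < PI / 2.
Proof. apply PI2_1. Qed.

Lemma sin_pos_bounds x : 0 <= x <= 1 -> x - x^3/6 <= sin x <= x.
Proof. intro H. pose proof PI_gt1.
  destruct (sin_bound x 0 ltac:(lra) ltac:(lra)) as [H1 H2].
  unfold sin_approx, sin_term in *. simpl in *.
  assert (A1 : x - x^3/6 <= sin x) by (eapply Rle_trans; [|apply H1]; right; field).
  assert (A2 : sin x <= x - x^3/6 + x^5/120) by (eapply Rle_trans; [apply H2|]; right; field).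
  split; [lra|]. assert (0 <= x^3) by (apply pow_le; lra).
  assert (x^5 <= x^3) by (replace (x^5) with (x^3 * (x*x)) by ring; assert (x*x <= 1) by nra; nra). lra. Qed.

Lemma cos_bounds x : -1 <= x <= 1 -> 1 - x^2/2 <= cos x <= 1 - x^2/2 + x^4/24.
Proof. intro H. pose proof PI_gt1.
  destruct (cos_bound x 0 ltac:(lra) ltac:(lra)) as [H1 H2].
  unfold cos_approx, cos_term in *. simpl in *.
  assert (A1 : 1 - x^2/2 <= cos x) by (eapply Rle_trans; [|apply H1]; right; field).
  assert (A2 : cos x <= 1 - x^2/2 + x^4/24) by (eapply Rle_trans; [apply H2|]; right; field). lra. Qed.

Lemma sin_le_abs x : -1 <= x <= 1 -> Rabs (sin x) <= Rabs x.
Proof. intro H. destruct (Rle_dec 0 x).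
  - destruct (sin_pos_bounds x ltac:(lra)). assert (x^3 <= x) by (simpl; nra).
    rewrite !Rabs_right; lra.
  - destruct (sin_pos_bounds (-x) ltac:(lra)). rewrite sin_neg in *. assert ((-x)^3 <= -x) by (simpl; nra).
    rewrite !Rabs_left1; lra. Qed.

Lemma sin_rem x rho : 0 < rho <= 1 -> Rabs x <= rho -> Rabs (sin x - x) <= rho * x^2.
Proof. intros Hr Hx. apply Rabs_le_inv' in Hx.
  assert (E : forall y, 0 <= y <= rho -> Rabs (sin y - y) <= rho * y^2).
  { intros y Hy. destruct (sin_pos_bounds y ltac:(lra)). assert (0 <= y^3) by (apply pow_le; lra).
    rewrite Rabs_left1 by lra. assert (y^3 <= rho * y^2). replace (y^3) with (y * y^2) by ring.
    apply Rmult_le_compat_r. apply pow2_ge_0. lra. lra. }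
  destruct (Rle_dec 0 x). apply E; lra.
  replace (sin x - x) with (- (sin (-x) - (-x))) by (rewrite sin_neg; ring). rewrite Rabs_Ropp.
  replace (x^2) with ((-x)^2) by ring. apply E; lra. Qed.

Lemma cos_rem x rho : 0 < rho <= 1 -> Rabs x <= rho -> Rabs (1 - cos x - x^2/2) <= rho * x^2.
Proof. intros Hr Hx. apply Rabs_le_inv' in Hx. destruct (cos_bounds x ltac:(lra)).
  assert (x^4 <= rho * x^2 * 24). replace (x^4) with (x^2 * x^2) by ring.
  assert (x^2 <= rho) by nra. assert (0 <= x^2) by apply pow2_ge_0. nra.
  apply Rabs_le. lra. Qed.

Lemma cos_rem1 x : -1 <= x <= 1 -> 0 <= 1 - cos x <= x^2/2.
Proof. intro H. destruct (cos_bounds x H). assert (x^4 <= x^2 * 1). replace (x^4) with (x^2*x^2) by ring.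
  assert (x^2 <= 1) by nra. assert (0 <= x^2) by apply pow2_ge_0. nra. lra. Qed.

Lemma edge_rem_bound p r ca sa dl vs vd rho :
  0 < p -> 0 < r -> Rabs ca <= 1 -> Rabs sa <= 1 -> 0 < rho <= 1 ->
  Rabs dl <= rho -> Rabs vs <= rho -> Rabs vd <= rho ->
  Rabs (p * r * (ca * (1 - cos dl - dl^2/2) + sa * (sin dl - dl))
       + (r * vs + p * vd) * (ca * (1 - cos dl) + sa * (sin dl - dl))
       - vs * vd * (ca * cos dl - sa * sin dl - ca))
  <= rho * ((2 * p * r + 2 * (p + r)) * dl^2 + vs^2 + vd^2).
Proof. intros Hp Hr Hca Hsa Hrho Hd Hvs Hvd.
  pose proof (sin_rem dl rho Hrho Hd) as S1. pose proof (cos_rem dl rho Hrho Hd) as C1.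
  assert (Hd' := Rabs_le_inv' _ _ Hd).
  pose proof (cos_rem1 dl ltac:(lra)) as C2. pose proof (sin_le_abs dl ltac:(lra)) as S2.
  assert (Hd2 : 0 <= dl^2) by apply pow2_ge_0.
  assert (A1 : Rabs (ca * (1 - cos dl - dl^2/2) + sa * (sin dl - dl)) <= 2 * rho * dl^2).
  { eapply Rle_trans. apply Rabs_triang. rewrite !Rabs_mult.
    assert (Rabs ca * Rabs (1 - cos dl - dl ^ 2 / 2) <= 1 * (rho * dl^2)). apply Rmult_le_compat; auto; apply Rabs_pos.
    assert (Rabs sa * Rabs (sin dl - dl) <= 1 * (rho * dl^2)). apply Rmult_le_compat; auto; apply Rabs_pos. lra. }
  assert (A2 : Rabs (ca * (1 - cos dl) + sa * (sin dl - dl)) <= 2 * dl^2).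
  { eapply Rle_trans. apply Rabs_triang. rewrite !Rabs_mult.
    assert (Rabs ca * Rabs (1 - cos dl) <= 1 * (dl^2/2)). apply Rmult_le_compat; try apply Rabs_pos; auto.
    rewrite Rabs_right; lra.
    assert (Rabs sa * Rabs (sin dl - dl) <= 1 * (rho * dl^2)). apply Rmult_le_compat; auto; apply Rabs_pos.
    assert (rho * dl^2 <= dl^2) by nra. lra. }
  assert (A3 : Rabs (ca * cos dl - sa * sin dl - ca) <= 2 * rho).
  { replace (ca * cos dl - sa * sin dl - ca) with (- (ca * (1 - cos dl)) - sa * sin dl) by ring.
    eapply Rle_trans. apply Rabs_triang. rewrite Rabs_Ropp, !Rabs_mult.
    assert (Rabs ca * Rabs (1 - cos dl) <= 1 * (dl^2/2)). apply Rmult_le_compat; try apply Rabs_pos; auto.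
    rewrite Rabs_right; lra.
    assert (Rabs (sin dl) <= rho) by lra.
    assert (Rabs sa * Rabs (sin dl) <= 1 * rho). apply Rmult_le_compat; try apply Rabs_pos; auto.
    assert (dl^2 <= rho * rho). replace (dl^2) with (Rabs dl * Rabs dl). apply Rmult_le_compat; try apply Rabs_pos; auto.
    rewrite <- Rabs_mult. simpl. rewrite Rmult_1_r. apply Rabs_right. nra.
    assert (rho * rho <= rho) by nra. rewrite Rabs_Ropp, Rabs_mult. lra. }
  assert (W : Rabs (r * vs + p * vd) <= (p + r) * rho).
  { eapply Rle_trans. apply Rabs_triang. rewrite !Rabs_mult, (Rabs_right r), (Rabs_right p) by lra.
    assert (r * Rabs vs <= r * rho) by (apply Rmult_le_compat_l; lra).
    assert (p * Rabs vd <= p * rho) by (apply Rmult_le_compat_l; lra). lra. }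
  assert (T : forall a b c, Rabs (a + b - c) <= Rabs a + Rabs b + Rabs c).
  { intros. unfold Rminus. eapply Rle_trans. apply Rabs_triang. rewrite Rabs_Ropp.
    pose proof (Rabs_triang a b). lra. }
  eapply Rle_trans. apply T. rewrite !Rabs_mult. rewrite (Rabs_right p), (Rabs_right r) by lra.
  assert (p * r * Rabs (ca * (1 - cos dl - dl ^ 2 / 2) + sa * (sin dl - dl)) <= p * r * (2 * rho * dl^2)).
  apply Rmult_le_compat_l; auto. nra.
  assert (Rabs (r * vs + p * vd) * Rabs (ca * (1 - cos dl) + sa * (sin dl - dl)) <= (p + r) * rho * (2 * dl^2)).
  apply Rmult_le_compat; try apply Rabs_pos; auto.
  assert (Rabs vs * Rabs vd * Rabs (ca * cos dl - sa * sin dl - ca) <= Rabs vs * Rabs vd * (2 * rho)).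
  apply Rmult_le_compat_l; auto. apply Rmult_le_pos; apply Rabs_pos.
  assert (2 * (Rabs vs * Rabs vd) <= vs^2 + vd^2).
  { rewrite <- (pow2_abs vs), <- (pow2_abs vd).
    pose proof (pow2_ge_0 (Rabs vs - Rabs vd)). nra. }
  nra.
Qed.


From Stdlib Require Import Reals Lra Lia List Arith Relation_Operators IndefiniteDescription Classical ZArith.
Import ListNotations.
Open Scope R_scope.

Definition Qf n (S : nat -> nat -> R) (v : nat -> R) := sumR n (fun i => sumR n (fun j => v i * S i j * v j)).

Lemma Qf_scal n S v r : Qf n S (fun i => r * v i) = r^2 * Qf n S v.
Proof. unfold Qf. rewrite <- sumR_scal. apply sumR_ext. intros. rewrite <- sumR_scal. apply sumR_ext. intros. ring. Qed.

Lemma sumsq_zero n v : sumR n (fun i => v i ^2) = 0 -> forall i, (i < n)%nat -> v i = 0.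
Proof. intros H i Hi. assert (v i ^2 <= sumR n (fun i => v i ^2)).
  apply (sumR_term n (fun i => v i ^2)); auto. intros; apply pow2_ge_0.
  assert (0 <= v i ^2) by apply pow2_ge_0. assert (v i ^2 = 0) by lra.
  nra. Qed.

Lemma cv_sq a l : Un_cv a l -> Un_cv (fun p => a p ^2) (l^2).
Proof. intro H. assert (Un_cv (fun p => a p * a p) (l * l)) by (apply CV_mult; auto).
  intros e He. destruct (H0 e He) as [N HN]. exists N. intros. simpl. rewrite !Rmult_1_r. auto. Qed.

Lemma cv_le_lim (a : nat -> R) l (b : nat -> R) : Un_cv a l -> Un_cv b 0 -> (forall k, a k <= b k) -> l <= 0.
Proof. intros Ha Hb Hab. destruct (Rle_dec l 0); auto. exfalso.
  destruct (Ha (l/2)) as [N1 H1]. lra. destruct (Hb (l/2)) as [N2 H2]. lra.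
  specialize (H1 (max N1 N2) ltac:(lia)). specialize (H2 (max N1 N2) ltac:(lia)). specialize (Hab (max N1 N2)).
  unfold Rdist in *. rewrite Rminus_0_r in H2. apply Rabs_def2 in H1. apply Rabs_def2 in H2. lra. Qed.

Lemma posdef_unif n (S : nat -> nat -> R) : posdef n S ->
  exists lam, 0 < lam /\ forall v, Qf n S v >= lam * sumR n (fun i => v i ^2).
Proof. intro HP. destruct (classic (exists lam, 0 < lam /\ forall v, Qf n S v >= lam * sumR n (fun i => v i ^2))) as [H|H]; auto.
  exfalso.
  assert (Hv : forall k : nat, exists v, Qf n S v < / (INR k + 1) * sumR n (fun i => v i ^2)).
  { intro k. apply NNPP. intro Hk. apply H. exists (/ (INR k + 1)). split.
    apply Rinv_0_lt_compat. pose proof (pos_INR k). lra.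
    intro v. apply Rnot_lt_ge. intro. apply Hk. exists v. auto. }
  set (vs := fun k => proj1_sig (constructive_indefinite_description _ (Hv k))).
  assert (Hvs : forall k, Qf n S (vs k) < / (INR k + 1) * sumR n (fun i => vs k i ^2)).
  { intro k. unfold vs. apply (proj2_sig (constructive_indefinite_description _ (Hv k))). }
  clearbody vs.
  set (s := fun k => sumR n (fun i => vs k i ^2)).
  assert (Hs : forall k, 0 < s k).
  { intro k. assert (0 <= s k) by (apply sumR_nonneg; intros; apply pow2_ge_0).
    destruct (Req_dec (s k) 0) as [E|E]; [|lra]. exfalso. specialize (Hvs k). change (sumR n (fun i => vs k i ^2)) with (s k) in Hvs. rewrite E in Hvs.
    assert (Qf n S (vs k) = 0). { unfold Qf. apply sumR_zero. intros. rewrite (sumsq_zero n (vs k) E i H1). apply sumR_zero. intros. ring. }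
    lra. }
  set (u := fun k i => / sqrt (s k) * vs k i).
  assert (Hu1 : forall k, sumR n (fun i => u k i ^2) = 1).
  { intro k. unfold u. transitivity (/ s k * s k). unfold s. rewrite <- sumR_scal. apply sumR_ext. intros.
    rewrite Rpow_mult_distr, pow_inv, pow2_sqrt by (left; apply Hs). reflexivity. specialize (Hs k). field. lra. }
  assert (Hu2 : forall k, Qf n S (u k) < / (INR k + 1)).
  { intro k. unfold u. rewrite Qf_scal. rewrite pow_inv, pow2_sqrt by (left; apply Hs).
    specialize (Hvs k). change (sumR n (fun i => vs k i ^2)) with (s k) in Hvs. specialize (Hs k).
    apply (Rmult_lt_reg_l (s k)); auto. rewrite <- Rmult_assoc, Rinv_r by lra. lra. }
  assert (Hb : forall k i, (i < n)%nat -> Rabs (u k i) <= 1).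
  { intros k i Hi. assert (u k i ^2 <= 1). rewrite <- (Hu1 k). apply (sumR_term n (fun i => u k i ^2)); auto.
    intros; apply pow2_ge_0. apply Rabs_le. nra. }
  destruct (bwN u 1 n) as [phi [y [Hphi Hy]]]. intros; apply Hb; auto.
  assert (Hy1 : sumR n (fun i => y i ^2) = 1).
  { apply (UL_sequence (fun k => sumR n (fun i => u (phi k) i ^2))).
    apply (sumR_cv n (fun k i => u (phi k) i ^2)). intros. apply cv_sq. auto.
    intros e He. exists 0%nat. intros. unfold Rdist. rewrite Hu1, Rminus_diag, Rabs_R0. auto. }
  assert (HyQ : Qf n S y <= 0).
  { apply (cv_le_lim (fun k => Qf n S (u (phi k))) _ (fun k => / (INR k + 1))).
    - unfold Qf. apply (sumR_cv n (fun k i => sumR n (fun j => u (phi k) i * S i j * u (phi k) j))).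
      intros i Hi. apply (sumR_cv n (fun k j => u (phi k) i * S i j * u (phi k) j)). intros j Hj.
      apply CV_mult. apply CV_mult. auto. intros e He. exists 0%nat. intros. unfold Rdist. rewrite Rminus_diag, Rabs_R0. auto. auto.
    - intros e He. destruct (archimed (/ e)) as [Ha _]. assert (0 < /e) by (apply Rinv_0_lt_compat; lra).
      exists (Z.to_nat (up (/ e))). intros k Hk. unfold Rdist. rewrite Rminus_0_r.
      assert (IZR (up (/ e)) <= INR k).
      { assert (0 <= up (/e))%Z. apply le_IZR. lra.
        rewrite <- (Z2Nat.id (up (/e))) by auto. rewrite <- INR_IZR_INZ. apply le_INR. lia. }
      pose proof (pos_INR k). rewrite Rabs_right. rewrite <- (Rinv_inv e). apply Rinv_lt_contravar.
      apply Rmult_lt_0_compat; lra. lra. left. apply Rinv_0_lt_compat. lra.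
    - intro k. specialize (Hu2 (phi k)). pose proof (incr_ge phi Hphi k) as Hk. apply le_INR in Hk.
      pose proof (pos_INR k). left. eapply Rlt_le_trans. apply Hu2. apply Rinv_le_contravar; lra. }
  assert (Hne : exists i, (i < n)%nat /\ y i <> 0).
  { apply NNPP. intro Hn. assert (sumR n (fun i => y i ^2) = 0). apply sumR_zero. intros.
    destruct (Req_dec (y i) 0). rewrite H1; ring. exfalso; apply Hn; exists i; auto. lra. }
  specialize (HP y Hne). unfold Qf in HyQ. lra.
Qed.

From Stdlib Require Import Reals Lra Lia List Arith Relation_Operators.
Import ListNotations.
Open Scope R_scope.

Lemma double_prod n (a b : nat -> R) c :
  sumR n (fun i => sumR n (fun j => a i * c * b j)) = c * (sumR n a * sumR n b).
Proof. transitivity (sumR n (fun i => (c * a i) * sumR n b)).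
  apply sumR_ext. intros. rewrite <- sumR_scal. apply sumR_ext. intros. ring.
  transitivity (sumR n (fun i => (c * sumR n b) * a i)). apply sumR_ext. intros. ring.
  rewrite sumR_scal. ring. Qed.

Section LB.
Variables (N : Net) (eb Vb eta V : nat -> R).
Let p k := Vb (src N k).
Let r k := Vb (dst N k).
Let ca k := cos (eb k).
Let sa k := sin (eb k).
Let dl k := eta k - eb k.
Let v i := V i - Vb i.
Let vs k := v (src N k).
Let vd k := v (dst N k).
Let w k := r k * vs k + p k * vd k.
Definition Qe k := p k * r k * ca k * dl k ^2 / 2 + w k * sa k * dl k - vs k * vd k * ca k.
Definition Re k := p k * r k * (ca k * (1 - cos (dl k) - dl k ^2/2) + sa k * (sin (dl k) - dl k))
       + w k * (ca k * (1 - cos (dl k)) + sa k * (sin (dl k) - dl k))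
       - vs k * vd k * (ca k * cos (dl k) - sa k * sin (dl k) - ca k).
Definition cS k := gam N Vb k * sin (eb k) * / cos (eb k) * sin (eb k).
Definition ak k := Bk N k * p k * r k * ca k.
Definition bk k := sa k / (p k * r k * ca k).

Lemma edge_split k : edgeU N eb Vb eta V k = Bk N k * (Qe k + Re k).
Proof. unfold edgeU, Qe, Re. replace (eta k) with (eb k + dl k) by (unfold dl; ring).
  rewrite cos_plus. unfold w, vs, vd, v, p, r, ca, sa, dl. field. Qed.

Lemma absD_sum k (x : nat -> R) : wf_edges N -> (k < mm N)%nat ->
  sumR (nn N) (fun i => Rabs (Dinc N i k) * x i) = x (src N k) + x (dst N k).
Proof. intros Hw Hk. destruct (Hw k Hk) as [H1 [H2 H3]].
  transitivity (sumR (nn N) (fun i => (if i =? src N k then x i else 0) + (if i =? dst N k then x i else 0))).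
  apply sumR_ext. intros i Hi. unfold Dinc.
  destruct (Nat.eqb_spec i (src N k)); destruct (Nat.eqb_spec i (dst N k)); try lia;
   try rewrite Rabs_R1; try rewrite (Rabs_left (-1)) by lra; try rewrite Rabs_R0; ring.
  rewrite sumR_plus, !sumR_delta; auto. Qed.

Lemma Qf_Smat : wf_edges N -> sym_edges N ->
  Qf (nn N) (Smat N eb Vb) v = sumR (nn N) (fun i => ediag N i * v i ^2)
     + sumR (mm N) (fun k => - 2 * Bk N k * ca k * vs k * vd k)
     - sumR (mm N) (fun k => cS k * (vs k / p k + vd k / r k)^2).
Proof. intros Hw Hs. unfold Qf, Smat.
  transitivity (sumR (nn N) (fun i => v i * EV N eb v i) -
     sumR (nn N) (fun i => sumR (nn N) (fun j => (v i / Vb i) * sumR (mm N) (fun k => Rabs (Dinc N i k) * cS k * Rabs (Dinc N j k)) * (v j / Vb j)))).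
  { rewrite <- sumR_minus. apply sumR_ext. intros. unfold EV. rewrite <- sumR_scal, <- sumR_minus. apply sumR_ext. intros.
    unfold Rdiv. replace (sumR (mm N) (fun k => Rabs (Dinc N i k) * cS k * Rabs (Dinc N i0 k))) with
     (sumR (mm N) (fun k => Rabs (Dinc N i k) * gam N Vb k * sin (eb k) * / cos (eb k) * sin (eb k) * Rabs (Dinc N i0 k))).
    ring. apply sumR_ext. intros. unfold cS. ring. }
  f_equal.
  - transitivity (sumR (nn N) (fun i => ediag N i * v i ^2) + sumR (nn N) (fun i => v i * sumR (mm N) (fun k =>
     (if src N k =? i then - Bk N k * cos (eb k) * v (dst N k) else 0)
   + (if dst N k =? i then - Bk N k * cos (eb k) * v (src N k) else 0)))).
    rewrite <- sumR_plus. apply sumR_ext. intros. rewrite EV_formula by auto. ring.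
    f_equal. rewrite reindex by auto. apply sumR_ext. intros. unfold vs, vd, ca. ring.
  - transitivity (sumR (mm N) (fun k => cS k * (sumR (nn N) (fun i => Rabs (Dinc N i k) * (v i / Vb i)) *
                                             sumR (nn N) (fun j => Rabs (Dinc N j k) * (v j / Vb j))))).
    + transitivity (sumR (nn N) (fun i => sumR (nn N) (fun j => sumR (mm N) (fun k =>
         (Rabs (Dinc N i k) * (v i / Vb i)) * cS k * (Rabs (Dinc N j k) * (v j / Vb j)))))).
      apply sumR_ext. intros. apply sumR_ext. intros.
      match goal with |- ?a * ?S * ?b = _ => replace (a * S * b) with ((a * b) * S) by ring end.
      rewrite <- sumR_scal. apply sumR_ext. intros. ring.
      transitivity (sumR (nn N) (fun i => sumR (mm N) (fun k => sumR (nn N) (fun j =>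
         (Rabs (Dinc N i k) * (v i / Vb i)) * cS k * (Rabs (Dinc N j k) * (v j / Vb j)))))).
      apply sumR_ext. intros. apply sumR_swap.
      rewrite (sumR_swap (nn N) (mm N)). apply sumR_ext. intros k Hk.
      apply double_prod.
    + apply sumR_ext. intros k Hk. rewrite !absD_sum by auto. unfold vs, vd, p, r. ring.
Qed.

Lemma Qsum : wf_edges N -> sym_edges N -> (forall i, (i < nn N)%nat -> 0 < Vb i) ->
  (forall k, (k < mm N)%nat -> - (PI/2) < eb k < PI/2) ->
  sumR (nn N) (fun i => /2 * ediag N i * v i ^2) + sumR (mm N) (fun k => Bk N k * Qe k)
  = /2 * Qf (nn N) (Smat N eb Vb) v + sumR (mm N) (fun k => ak k / 2 * (dl k + bk k * w k)^2).
Proof. intros Hw Hs HV He. rewrite Qf_Smat by auto.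
  rewrite !Rmult_minus_distr_l, !Rmult_plus_distr_l, <- !sumR_scal.
  transitivity (sumR (nn N) (fun i => / 2 * (ediag N i * v i ^ 2)) +
     sumR (mm N) (fun k => / 2 * (- 2 * Bk N k * ca k * vs k * vd k) - /2 * (cS k * (vs k / p k + vd k / r k) ^ 2) + ak k / 2 * (dl k + bk k * w k) ^ 2)).
  2:{ rewrite !sumR_plus, !sumR_minus. ring. }
  f_equal. apply sumR_ext; intros; ring.
  apply sumR_ext. intros k Hk. destruct (Hw k Hk) as [H1 [H2 _]].
  assert (0 < p k) by (apply HV; auto). assert (0 < r k) by (apply HV; auto).
  assert (0 < ca k) by (apply cos_gt_0; apply He; auto).
  unfold Qe, cS, ak, bk, gam, Bk, w. fold (p k) (r k) (ca k) (sa k). field. lra. Qed.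

Lemma sq_split t x y : 0 <= t <= /2 -> (x + y)^2 >= t * x^2 - 2 * t * y^2.
Proof. intro H. 
  assert (E : (x+y)^2 - t*x^2 + 2*t*y^2 = (1-t)*(x + y/(1-t))^2 + (t*(1-2*t)/(1-t)) * y^2) by (field; lra).
  assert (0 <= (1-t)*(x + y/(1-t))^2) by (apply Rmult_le_pos; [lra|apply pow2_ge_0]).
  assert (0 <= (t*(1-2*t)/(1-t)) * y^2). apply Rmult_le_pos; [|apply pow2_ge_0].
  unfold Rdiv. apply Rmult_le_pos. apply Rmult_le_pos; lra. left; apply Rinv_0_lt_compat; lra.
  lra. Qed.

End LB.

From Stdlib Require Import Reals Lra Lia List Arith Relation_Operators.
Import ListNotations.
Open Scope R_scope.

Lemma sum_edges_sq N (v : nat -> R) : wf_edges N ->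
  sumR (mm N) (fun k => v (src N k) ^2 + v (dst N k) ^2) <= INR (mm N) * (2 * sumR (nn N) (fun i => v i ^2)).
Proof. intro Hw. apply sumR_const_le. intros k Hk. destruct (Hw k Hk) as [H1 [H2 _]].
  assert (v (src N k) ^2 <= sumR (nn N) (fun i => v i ^2)) by (apply (sumR_term _ (fun i => v i ^2)); auto; intros; apply pow2_ge_0).
  assert (v (dst N k) ^2 <= sumR (nn N) (fun i => v i ^2)) by (apply (sumR_term _ (fun i => v i ^2)); auto; intros; apply pow2_ge_0).
  lra. Qed.

Lemma w_sq p r vs vd : (r * vs + p * vd)^2 <= 2 * (p^2 + r^2) * (vs^2 + vd^2).
Proof. assert (0 <= (r*vs - p*vd)^2) by apply pow2_ge_0.
  assert (0 <= p^2 * vs^2) by (apply Rmult_le_pos; apply pow2_ge_0).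
  assert (0 <= r^2 * vd^2) by (apply Rmult_le_pos; apply pow2_ge_0). nra. Qed.

Lemma le_div_mul x y d : 0 < d -> x <= y / d -> x * d <= y.
Proof. intros Hd H. replace y with (y / d * d) by (field; lra). apply Rmult_le_compat_r; lra. Qed.

Lemma Ubar_lb N eb Vb : wf_edges N -> sym_edges N -> (forall i, (i < nn N)%nat -> 0 < Vb i) ->
  (forall k, (k < mm N)%nat -> - (PI/2) < eb k < PI/2) -> (forall k, (k < mm N)%nat -> 0 < Bk N k) ->
  posdef (nn N) (Smat N eb Vb) ->
  exists rho mu, 0 < rho <= 1 /\ 0 < mu /\ forall eta V,
    (forall k, (k < mm N)%nat -> Rabs (eta k - eb k) <= rho) ->
    (forall i, (i < nn N)%nat -> Rabs (V i - Vb i) <= rho) ->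
    Ubar N eb Vb eta V >= mu * (sumR (mm N) (fun k => (eta k - eb k)^2) + sumR (nn N) (fun i => (V i - Vb i)^2)).
Proof. intros Hw Hs HV He HB HP.
  destruct (posdef_unif _ _ HP) as [lam [Hlam Hq]].
  destruct (fin_min (mm N) (ak N eb Vb)) as [a0 [Ha0 Hak]].
  { intros k Hk. destruct (Hw k Hk) as [H1 [H2 _]]. unfold ak. cbv beta.
    assert (0 < cos (eb k)) by (apply cos_gt_0; apply He; auto).
    repeat apply Rmult_lt_0_compat; auto. }
  destruct (fin_max (mm N) (fun k => 2 * ak N eb Vb k * bk N eb Vb k ^2 * (Vb (src N k) ^2 + Vb (dst N k) ^2))) as [kap [Hkap Hkapk]].
  destruct (fin_max (mm N) (fun k => Bk N k * (2 * Vb (src N k) * Vb (dst N k) + 2 * (Vb (src N k) + Vb (dst N k))))) as [bet [Hbet Hbetk]].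
  destruct (fin_max (mm N) (Bk N)) as [Bm [HBm HBmk]].
  set (M := INR (mm N)). assert (HM : 0 <= M) by apply pos_INR.
  set (t := Rmin (/2) (lam / (8*M*kap + 1))).
  assert (Ht : 0 < t <= /2).
  { split. apply Rmin_glb_lt. lra. apply Rdiv_lt_0_compat; nra. apply Rmin_l. }
  assert (Ht2 : 8 * M * kap * t <= lam).
  { assert (t <= lam / (8*M*kap+1)) by apply Rmin_r.
    assert (t * (8*M*kap+1) <= lam) by (apply le_div_mul; auto; nra). nra. }
  set (rho := Rmin 1 (Rmin (lam/(16*M*Bm+1)) (t*a0/(4*bet+1)))).
  assert (Hr : 0 < rho <= 1).
  { split. apply Rmin_glb_lt. lra. apply Rmin_glb_lt; apply Rdiv_lt_0_compat; nra. apply Rmin_l. }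
  assert (Hr2 : 16 * M * Bm * rho <= lam).
  { assert (rho <= lam/(16*M*Bm+1)) by (eapply Rle_trans; [apply Rmin_r| apply Rmin_l]).
    apply le_div_mul in H; nra. }
  assert (Hr3 : 4 * bet * rho <= t * a0).
  { assert (rho <= t*a0/(4*bet+1)) by (eapply Rle_trans; [apply Rmin_r| apply Rmin_r]).
    apply le_div_mul in H; nra. }
  exists rho, (Rmin (lam/8) (t*a0/4)). split; auto. split.
  apply Rmin_glb_lt; nra.
  intros eta V Hdl Hv.
  set (Sd := sumR (mm N) (fun k => (eta k - eb k)^2)).
  set (Sv := sumR (nn N) (fun i => (V i - Vb i)^2)).
  set (Se := sumR (mm N) (fun k => (V (src N k) - Vb (src N k)) ^2 + (V (dst N k) - Vb (dst N k)) ^2)).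
  assert (HSe : Se <= M * (2 * Sv)) by (apply (sum_edges_sq N (fun i => V i - Vb i)); auto).
  assert (HSd : 0 <= Sd) by (apply sumR_nonneg; intros; apply pow2_ge_0).
  assert (HSv : 0 <= Sv) by (apply sumR_nonneg; intros; apply pow2_ge_0).
  assert (HSe0 : 0 <= Se) by (apply sumR_nonneg; intros; pose proof (pow2_ge_0 (V (src N i) - Vb (src N i))); pose proof (pow2_ge_0 (V (dst N i) - Vb (dst N i))); lra).
  assert (Edec : Ubar N eb Vb eta V = /2 * Qf (nn N) (Smat N eb Vb) (fun i => V i - Vb i)
      + sumR (mm N) (fun k => ak N eb Vb k / 2 * ((eta k - eb k) + bk N eb Vb k * (Vb (dst N k) * (V (src N k) - Vb (src N k)) + Vb (src N k) * (V (dst N k) - Vb (dst N k))))^2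
                              + Bk N k * Re N eb Vb eta V k)).
  { unfold Ubar. rewrite (sumR_ext (mm N) (edgeU N eb Vb eta V) (fun k => Bk N k * Qe N eb Vb eta V k + Bk N k * Re N eb Vb eta V k)).
    rewrite sumR_plus. rewrite <- Rplus_assoc. rewrite Qsum by auto. rewrite sumR_plus. ring.
    intros. rewrite edge_split. ring. }
  assert (Hedge : forall k, (k < mm N)%nat ->
     ak N eb Vb k / 2 * ((eta k - eb k) + bk N eb Vb k * (Vb (dst N k) * (V (src N k) - Vb (src N k)) + Vb (src N k) * (V (dst N k) - Vb (dst N k))))^2
       + Bk N k * Re N eb Vb eta V k
     >= (t * a0 / 2 - rho * bet) * (eta k - eb k)^2 - (t * kap + rho * Bm) * ((V (src N k) - Vb (src N k)) ^2 + (V (dst N k) - Vb (dst N k)) ^2)).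
  { intros k Hk. destruct (Hw k Hk) as [H1 [H2 _]].
    set (dl := eta k - eb k).
    set (vs := V (src N k) - Vb (src N k)). set (vd := V (dst N k) - Vb (dst N k)).
    set (p := Vb (src N k)). set (r := Vb (dst N k)).
    set (a := ak N eb Vb k). set (b := bk N eb Vb k).
    assert (Ha : a0 <= a) by (apply Hak; auto).
    assert (Hp : 0 < p) by (apply HV; auto). assert (Hr' : 0 < r) by (apply HV; auto).
    assert (HBk : 0 < Bk N k) by auto.
    assert (Hka : 2 * a * b^2 * (p^2 + r^2) <= kap) by (apply (Hkapk k Hk)).
    assert (Hbe : Bk N k * (2 * p * r + 2 * (p + r)) <= bet) by (apply (Hbetk k Hk)).
    assert (HBm' : Bk N k <= Bm) by auto.
    assert (Q1 : a / 2 * (dl + b * (r * vs + p * vd))^2 >= t * a0 / 2 * dl^2 - t * kap * (vs^2 + vd^2)).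
    { pose proof (sq_split t dl (b * (r * vs + p * vd)) ltac:(lra)) as S.
      pose proof (w_sq p r vs vd) as Wq.
      assert (0 <= dl^2) by apply pow2_ge_0. assert (0 <= vs^2 + vd^2) by (pose proof (pow2_ge_0 vs); pose proof (pow2_ge_0 vd); lra).
      assert (a / 2 * (dl + b * (r * vs + p * vd))^2 >= a / 2 * (t * dl^2 - 2 * t * (b * (r * vs + p * vd))^2)).
      { apply Rle_ge. apply Rmult_le_compat_l. lra. lra. }
      assert (a * b^2 * (r * vs + p * vd)^2 <= a * b^2 * (2 * (p^2 + r^2) * (vs^2 + vd^2))).
      { apply Rmult_le_compat_l; auto. apply Rmult_le_pos. lra. apply pow2_ge_0. }
      assert (2 * a * b^2 * (p^2 + r^2) * (vs^2 + vd^2) <= kap * (vs^2 + vd^2)) by (apply Rmult_le_compat_r; auto).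
      assert (t * a0 * dl^2 <= t * a * dl^2) by (apply Rmult_le_compat_r; auto; nra).
      assert (t * (a * b^2 * (r * vs + p * vd)^2) <= t * (kap * (vs^2 + vd^2))) by (apply Rmult_le_compat_l; lra).
      replace ((b * (r * vs + p * vd))^2) with (b^2 * (r * vs + p * vd)^2) in H4 by ring. nra. }
    assert (R1 : Rabs (Re N eb Vb eta V k) <= rho * ((2 * p * r + 2 * (p + r)) * dl^2 + vs^2 + vd^2)).
    { unfold Re. cbv beta. apply edge_rem_bound; auto. apply Rabs_le; apply COS_bound. apply Rabs_le; apply SIN_bound. apply Hdl; auto. apply Hv; auto. apply Hv; auto. }
    assert (R2 : Bk N k * Re N eb Vb eta V k >= - (rho * bet * dl^2 + rho * Bm * (vs^2 + vd^2))).
    { apply Rabs_le_inv' in R1. 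
      assert (Bk N k * Re N eb Vb eta V k >= - (Bk N k * (rho * ((2 * p * r + 2 * (p + r)) * dl^2 + vs^2 + vd^2)))).
      { apply Rle_ge. match goal with |- - (?B * ?X) <= _ => replace (- (B * X)) with (B * (- X)) by ring end.
        apply Rmult_le_compat_l; lra. }
      assert (0 <= dl^2) by apply pow2_ge_0. assert (0 <= vs^2 + vd^2) by (pose proof (pow2_ge_0 vs); pose proof (pow2_ge_0 vd); lra).
      assert (Bk N k * (2 * p * r + 2 * (p + r)) * dl^2 <= bet * dl^2) by (apply Rmult_le_compat_r; auto).
      assert (Bk N k * (vs^2 + vd^2) <= Bm * (vs^2 + vd^2)) by (apply Rmult_le_compat_r; auto).
      assert (E1 : Bk N k * (rho * ((2 * p * r + 2 * (p + r)) * dl ^ 2 + vs ^ 2 + vd ^ 2)) =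
                   rho * (Bk N k * (2 * p * r + 2 * (p + r)) * dl^2 + Bk N k * (vs^2 + vd^2))) by ring.
      assert (rho * (Bk N k * (2 * p * r + 2 * (p + r)) * dl^2 + Bk N k * (vs^2 + vd^2)) <=
              rho * (bet * dl^2 + Bm * (vs^2 + vd^2))) by (apply Rmult_le_compat_l; lra).
      lra. }
    lra. }
  rewrite Edec.
  assert (HQ : /2 * Qf (nn N) (Smat N eb Vb) (fun i => V i - Vb i) >= lam / 2 * Sv).
  { specialize (Hq (fun i => V i - Vb i)). cbv beta in Hq. fold Sv in Hq. lra. }
  assert (HE : sumR (mm N) (fun k => ak N eb Vb k / 2 * ((eta k - eb k) + bk N eb Vb k * (Vb (dst N k) * (V (src N k) - Vb (src N k)) + Vb (src N k) * (V (dst N k) - Vb (dst N k))))^2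
                              + Bk N k * Re N eb Vb eta V k)
     >= (t * a0 / 2 - rho * bet) * Sd - (t * kap + rho * Bm) * Se).
  { unfold Sd, Se. rewrite <- !sumR_scal, <- sumR_minus. apply Rle_ge. apply sumR_le. intros. apply Rge_le. apply Hedge; auto. }
  assert ((t * kap + rho * Bm) * Se <= (t * kap + rho * Bm) * (M * (2 * Sv))).
  { apply Rmult_le_compat_l; auto. apply Rplus_le_le_0_compat; apply Rmult_le_pos; lra. }
  assert (Rmin (lam / 8) (t * a0 / 4) * (Sd + Sv) <= t * a0 / 4 * Sd + lam / 8 * Sv).
  { assert (Rmin (lam / 8) (t * a0 / 4) <= lam / 8) by apply Rmin_l.
    assert (Rmin (lam / 8) (t * a0 / 4) <= t * a0/4) by apply Rmin_r. nra. }
  nra.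
Qed.

From Stdlib Require Import Reals Lra Lia List Arith Relation_Operators IndefiniteDescription Classical ZArith.
Import ListNotations.
Open Scope R_scope.

Lemma contS_abs N F y : contS N F y -> contS N (fun z => Rabs (F z)) y.
Proof. intro. apply contS_comp; auto. apply Rcontinuity_abs. Qed.

Lemma contS_DGs N i y : wf_edges N -> contS N (fun z => DGs N (s_V z) (s_eta z) i) y.
Proof. intro Hw. unfold DGs. apply contS_sumR. intros k Hk. destruct (Hw k Hk) as [H1 [H2 _]].
  unfold gam. apply contS_mult. apply contS_mult. apply contS_const.
  apply contS_mult. apply contS_mult; apply contS_V; auto. apply contS_const.
  apply contS_sin. apply contS_eta; auto. Qed.

Lemma contS_Emat N i j y : contS N (fun z => Emat N (s_eta z) i j) y.
Proof. unfold Emat. destruct (i =? j). apply contS_const.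
  apply contS_sumR. intros k Hk. destruct (joins N k i j). apply contS_mult. apply contS_const.
  apply contS_cos. apply contS_eta; auto. apply contS_const. Qed.

Lemma contS_EV N i y : contS N (fun z => EV N (s_eta z) (s_V z) i) y.
Proof. unfold EV. apply contS_sumR. intros j Hj. apply contS_mult. apply contS_Emat. apply contS_V; auto. Qed.

Section RhsCont.
Variables (N : Net) (q Pl : nat -> R) (c : nat -> nat -> bool).
Lemma contS_rhs_eta k y : contS N (fun z => s_eta (rhs N q Pl c z) k) y.
Proof. unfold rhs. simpl. apply contS_sumR. intros. apply contS_mult. apply contS_const. apply contS_om; auto. Qed.
Lemma contS_rhs_om i y : wf_edges N -> (i < nn N)%nat -> contS N (fun z => s_om (rhs N q Pl c z) i) y.
Proof. intros Hw Hi. unfold rhs, uctl. simpl. apply contS_mult. apply contS_const.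
  apply contS_minus. apply contS_minus. apply contS_minus. apply contS_mult. apply contS_const. apply contS_th; auto.
  apply contS_DGs; auto. apply contS_mult. apply contS_const. apply contS_om; auto. apply contS_const. Qed.
Lemma contS_rhs_V i y : contS N (fun z => s_V (rhs N q Pl c z) i) y.
Proof. unfold rhs. simpl. apply contS_mult. apply contS_const. apply contS_plus. apply contS_opp. apply contS_EV. apply contS_const. Qed.
Lemma contS_rhs_th i y : (i < nn N)%nat -> contS N (fun z => s_th (rhs N q Pl c z) i) y.
Proof. intro Hi. unfold rhs. simpl. apply contS_minus. apply contS_sumR. intros j Hj. destruct (c i j).
  apply contS_minus; apply contS_th; auto. apply contS_const.
  apply contS_mult. apply contS_const. apply contS_om; auto. Qed.
End RhsCont.

Definition zst := mkst (fun _ => 0) (fun _ => 0) (fun _ => 0) (fun _ => 0).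

Lemma contS_speed N q Pl c y : wf_edges N -> contS N (fun z => sdist N (rhs N q Pl c z) zst) y.
Proof. intro Hw. unfold sdist. apply contS_plus. apply contS_sumR. intros. apply contS_abs. apply contS_minus.
  apply contS_rhs_eta. apply contS_const.
  apply contS_sumR. intros i Hi. apply contS_plus. apply contS_plus; apply contS_abs; apply contS_minus.
  apply contS_rhs_om; auto. apply contS_const. apply contS_rhs_V. apply contS_const.
  apply contS_abs; apply contS_minus. apply contS_rhs_th; auto. apply contS_const. Qed.

Lemma contS_Dis N c y : contS N (Dis N c) y.
Proof. unfold Dis. apply contS_plus. apply contS_plus.
  apply contS_sumR. intros. apply contS_mult. apply contS_const. apply contS_sqr. apply contS_om; auto.
  apply contS_sumR. intros. apply contS_mult. apply contS_const. apply contS_sqr. apply contS_minus. apply contS_EV. apply contS_const.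
  apply contS_mult. apply contS_const. apply contS_sumR. intros i Hi. apply contS_sumR. intros j Hj. destruct (c i j).
  apply contS_sqr. apply contS_minus; apply contS_th; auto. apply contS_const. Qed.

Lemma contS_Hf N eb Vb thb y : wf_edges N -> contS N (Hf N eb Vb thb) y.
Proof. intro Hw. unfold Hf, Ubar. apply contS_plus. apply contS_plus.
  apply contS_sumR. intros. apply contS_mult. apply contS_const. apply contS_sqr. apply contS_om; auto.
  apply contS_sumR. intros. apply contS_mult. apply contS_const. apply contS_sqr. apply contS_minus. apply contS_th; auto. apply contS_const.
  apply contS_plus. apply contS_sumR. intros. apply contS_mult. apply contS_const. apply contS_sqr. apply contS_minus. apply contS_V; auto. apply contS_const.
  apply contS_sumR. intros k Hk. destruct (Hw k Hk) as [H1 [H2 _]]. unfold edgeU. apply contS_mult. apply contS_const.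
  repeat first [ apply contS_plus | apply contS_minus | apply contS_mult | apply contS_opp | apply contS_cos | apply contS_sin
    | apply contS_V; auto | apply contS_eta; auto | apply contS_const ]. Qed.

Definition psi (N : Net) (eb Vb : nat -> R) (thb : R) (z : st) :=
  sumR (mm N) (fun k => (s_eta z k - eb k)^2) +
  sumR (nn N) (fun i => (s_om z i)^2 + (s_V z i - Vb i)^2 + (s_th z i - thb)^2).

Lemma contS_psi N eb Vb thb y : contS N (psi N eb Vb thb) y.
Proof. unfold psi. apply contS_plus. apply contS_sumR. intros. apply contS_sqr. apply contS_minus. apply contS_eta; auto. apply contS_const.
  apply contS_sumR. intros. apply contS_plus. apply contS_plus. apply contS_sqr; apply contS_om; auto.
  apply contS_sqr; apply contS_minus. apply contS_V; auto. apply contS_const.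
  apply contS_sqr; apply contS_minus. apply contS_th; auto. apply contS_const. Qed.

Lemma cont_sumR_time n (F : nat -> R -> R) t : (forall i, (i < n)%nat -> continuity_pt (F i) t) ->
  continuity_pt (fun s => sumR n (fun i => F i s)) t.
Proof. induction n; intro H. unfold sumR; simpl. apply continuity_pt_const. intros a b; auto.
  assert (E : (fun s => sumR (S n) (fun i => F i s)) = (fun s => sumR n (fun i => F i s) + F n s)).
  apply FunctionalExtensionality.functional_extensionality. intro. apply sumR_S.
  rewrite E. apply (continuity_pt_plus (fun s => sumR n (fun i => F i s)) (F n)).
  apply IHn; intros; apply H; lia. apply H; lia. Qed.

Lemma cont_dist_time (f : R -> R) t : continuity_pt f t -> continuity_pt (fun s => Rabs (f s - f t)) t.
Proof. intro H. apply (continuity_pt_comp (fun s => f s - f t) Rabs). apply (continuity_pt_minus f (fun _ => f t)); auto.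
  apply continuity_pt_const. intros a b; auto. apply Rcontinuity_abs. Qed.

Lemma solves_sdist_cont N q Pl c x t : solves_at N q Pl c x t ->
  forall e, 0 < e -> exists d, 0 < d /\ forall s, Rabs (s - t) < d -> sdist N (x s) (x t) < e.
Proof. intros [He Hn] e Hpos.
  assert (C : continuity_pt (fun s => sdist N (x s) (x t)) t).
  { unfold sdist. apply (continuity_pt_plus (fun s => sumR (mm N) (fun k => Rabs (s_eta (x s) k - s_eta (x t) k)))
       (fun s => sumR (nn N) (fun i => Rabs (s_om (x s) i - s_om (x t) i) + Rabs (s_V (x s) i - s_V (x t) i) + Rabs (s_th (x s) i - s_th (x t) i)))).
    apply (cont_sumR_time (mm N) (fun k s => Rabs (s_eta (x s) k - s_eta (x t) k))). intros k Hk.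
    apply (cont_dist_time (fun s => s_eta (x s) k)). apply derivable_continuous_pt. exists (s_eta (rhs N q Pl c (x t)) k). apply He; auto.
    apply (cont_sumR_time (nn N) (fun i s => Rabs (s_om (x s) i - s_om (x t) i) + Rabs (s_V (x s) i - s_V (x t) i) + Rabs (s_th (x s) i - s_th (x t) i))).
    intros i Hi. destruct (Hn i Hi) as [A [B D]].
    apply (continuity_pt_plus (fun s => Rabs (s_om (x s) i - s_om (x t) i) + Rabs (s_V (x s) i - s_V (x t) i))).
    apply (continuity_pt_plus (fun s => Rabs (s_om (x s) i - s_om (x t) i))).
    apply (cont_dist_time (fun s => s_om (x s) i)). apply derivable_continuous_pt. eexists; apply A.
    apply (cont_dist_time (fun s => s_V (x s) i)). apply derivable_continuous_pt. eexists; apply B.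
    apply (cont_dist_time (fun s => s_th (x s) i)). apply derivable_continuous_pt. eexists; apply D. }
  destruct (C e Hpos) as [d [Hd Hc]]. exists d. split; auto. intros s Hs.
  destruct (Req_dec s t). subst. rewrite sdist_refl. lra.
  specialize (Hc s). simpl in Hc. unfold R_dist in Hc. rewrite sdist_refl, Rminus_0_r in Hc.
  assert (Rabs (sdist N (x s) (x t)) < e). apply Hc. split. split. constructor. auto. auto.
  rewrite Rabs_right in H0. auto. apply Rle_ge, sdist_nonneg. Qed.

Lemma cont_comp_time N q Pl c x t F : solves_at N q Pl c x t -> contS N F (x t) ->
  continuity_pt (fun s => F (x s)) t.
Proof. intros Hs HF e He. destruct (HF e He) as [d [Hd H]].
  destruct (solves_sdist_cont N q Pl c x t Hs d Hd) as [d2 [Hd2 H2]].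
  exists d2. split; auto. intros s [_ Hs2]. simpl in *. unfold R_dist in *. apply H. apply H2. auto. Qed.

Lemma bounded_on N C (P : st -> Prop) (F : st -> R) :
  (forall z, P z -> bnd_st N C z) -> (forall y, contS N F y) ->
  exists K, forall z, P z -> Rabs (F z) <= K.
Proof. intros HP HF. apply NNPP. intro Hn.
  assert (Hz : forall n : nat, exists z, P z /\ INR n < Rabs (F z)).
  { intro n. apply NNPP. intro Hm. apply Hn. exists (INR n). intros z Hz. apply Rnot_lt_le. intro. apply Hm. exists z. auto. }
  set (zs := fun n => proj1_sig (constructive_indefinite_description _ (Hz n))).
  assert (Hzs : forall n, P (zs n) /\ INR n < Rabs (F (zs n))).
  { intro n. unfold zs. apply (proj2_sig (constructive_indefinite_description _ (Hz n))). }
  clearbody zs.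
  destruct (bw_st N C zs) as [y Hy]. intro p. apply HP, Hzs.
  destruct (HF y 1 ltac:(lra)) as [d [Hd H]].
  destruct (archimed (Rabs (F y) + 1)) as [Ha _].
  assert (0 <= up (Rabs (F y) + 1))%Z. apply le_IZR. pose proof (Rabs_pos (F y)). lra.
  destruct (Hy d Hd (Z.to_nat (up (Rabs (F y) + 1)))) as [p [Hp1 Hp2]].
  specialize (H (zs p) Hp2). destruct (Hzs p) as [_ Hp].
  apply le_INR in Hp1. rewrite INR_IZR_INZ, Z2Nat.id in Hp1 by auto.
  assert (Rabs (F (zs p)) <= Rabs (F y) + Rabs (F (zs p) - F y)).
  { replace (F (zs p)) with (F y + (F (zs p) - F y)) at 1 by ring. apply Rabs_triang. }
  lra. Qed.

Lemma comp_lip (f f' : R -> R) a b K : a <= b ->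
  (forall s, a <= s <= b -> derivable_pt_lim f s (f' s) /\ Rabs (f' s) <= K) ->
  Rabs (f b - f a) <= K * (b - a).
Proof. intros Hab H. destruct (Req_dec a b). subst. rewrite Rminus_diag, Rabs_R0. lra.
  destruct (MVT_cor2 f f' a b) as [c0 [E Hc]]. lra. intros; apply H; auto.
  rewrite E, Rabs_mult, (Rabs_right (b - a)) by lra. apply Rmult_le_compat_r. lra. apply H; lra. Qed.

Lemma traj_lip N q Pl c x a b K : a <= b ->
  (forall s, a <= s <= b -> solves_at N q Pl c x s /\ sdist N (rhs N q Pl c (x s)) zst <= K) ->
  sdist N (x b) (x a) <= (INR (mm N) + 3 * INR (nn N)) * (K * (b - a)).
Proof. intros Hab H. unfold sdist at 1.
  assert (A : sumR (mm N) (fun k => Rabs (s_eta (x b) k - s_eta (x a) k)) <= INR (mm N) * (K * (b - a))).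
  { apply sumR_const_le. intros k Hk.
    apply (comp_lip (fun s => s_eta (x s) k) (fun s => s_eta (rhs N q Pl c (x s)) k)); auto.
    intros s Hs. destruct (H s Hs) as [[He _] HK]. split. apply He; auto.
    eapply Rle_trans. 2: apply HK. pose proof (sdist_eta N (rhs N q Pl c (x s)) zst k Hk). simpl in H0. rewrite Rminus_0_r in H0. auto. }
  assert (B : sumR (nn N) (fun i => Rabs (s_om (x b) i - s_om (x a) i) + Rabs (s_V (x b) i - s_V (x a) i) + Rabs (s_th (x b) i - s_th (x a) i))
             <= INR (nn N) * (3 * (K * (b - a)))).
  { apply sumR_const_le. intros i Hi.
    assert (Rabs (s_om (x b) i - s_om (x a) i) <= K * (b - a)).
    { apply (comp_lip (fun s => s_om (x s) i) (fun s => s_om (rhs N q Pl c (x s)) i)); auto.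
      intros s Hs. destruct (H s Hs) as [[_ Hn] HK]. split. apply Hn; auto.
      eapply Rle_trans. 2: apply HK. pose proof (sdist_om N (rhs N q Pl c (x s)) zst i Hi). simpl in H0. rewrite Rminus_0_r in H0. auto. }
    assert (Rabs (s_V (x b) i - s_V (x a) i) <= K * (b - a)).
    { apply (comp_lip (fun s => s_V (x s) i) (fun s => s_V (rhs N q Pl c (x s)) i)); auto.
      intros s Hs. destruct (H s Hs) as [[_ Hn] HK]. split. apply Hn; auto.
      eapply Rle_trans. 2: apply HK. pose proof (sdist_V N (rhs N q Pl c (x s)) zst i Hi). simpl in H1. rewrite Rminus_0_r in H1. auto. }
    assert (Rabs (s_th (x b) i - s_th (x a) i) <= K * (b - a)).
    { apply (comp_lip (fun s => s_th (x s) i) (fun s => s_th (rhs N q Pl c (x s)) i)); auto.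
      intros s Hs. destruct (H s Hs) as [[_ Hn] HK]. split. apply Hn; auto.
      eapply Rle_trans. 2: apply HK. pose proof (sdist_th N (rhs N q Pl c (x s)) zst i Hi). simpl in H2. rewrite Rminus_0_r in H2. auto. }
    lra. }
  lra. Qed.

From Stdlib Require Import Reals Lra Lia List Arith Relation_Operators IndefiniteDescription Classical ZArith Ranalysis5.
Import ListNotations.
Open Scope R_scope.

Section Main.
Variables (N : Net) (q Pl : nat -> R) (c : nat -> nat -> bool) (etab Vb : nat -> R).
Hypothesis Hw : wf_edges N.
Hypothesis Hs : sym_edges N.
Hypothesis HB : forall k, (k < mm N)%nat -> 0 < Bk N k.
Hypothesis HMAT : forall i, (i < nn N)%nat -> 0 < Md N i /\ 0 < Ad N i /\ 0 < Td N i.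
Hypothesis Hq : forall i, (i < nn N)%nat -> 0 < q i.
Hypothesis Hc : forall i j, c i j = c j i.
Hypothesis Hcc : connected (nn N) c.
Hypothesis Heb : forall k, (k < mm N)%nat -> - (PI / 2) < etab k < PI / 2.
Hypothesis HV : forall i, (i < nn N)%nat -> 0 < Vb i.
Hypothesis Hu : forall i, (i < nn N)%nat -> ubar (nn N) q Pl i - Pl i = DGs N Vb etab i.
Hypothesis HE : forall i, (i < nn N)%nat -> EV N etab Vb i = Efd N i.
Hypothesis HP : cond_star N etab Vb.

Let thb := thetabar (nn N) q Pl 0%nat.
Let HH := Hf N etab Vb thb.
Let DD := Dis N c.
Let PS := psi N etab Vb thb.
Let xbar := mkst etab (fun _ => 0) Vb (thetabar (nn N) q Pl).

Lemma Hderiv x t : solves_at N q Pl c x t -> derivable_pt_lim (fun s => HH (x s)) t (- DD (x t)).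
Proof. intros [He Hn]. eapply D_ext. apply Hf_deriv; auto. apply Dv_rhs; auto.
  intros i Hi. destruct (HMAT i Hi) as [H _]. lra. intros i Hi. destruct (HMAT i Hi) as [_ [_ H]]. lra.
  intros i Hi. specialize (Hq i Hi). lra. Qed.

Lemma DD_nonneg z : 0 <= DD z.
Proof. unfold DD, Dis. assert (0 <= sumR (nn N) (fun i => Ad N i * (s_om z i)^2)).
  apply sumR_nonneg. intros i Hi. destruct (HMAT i Hi) as [_ [Ha _]]. apply Rmult_le_pos. lra. apply pow2_ge_0.
  assert (0 <= sumR (nn N) (fun i => / Td N i * (EV N (s_eta z) (s_V z) i - Efd N i)^2)).
  apply sumR_nonneg. intros i Hi. destruct (HMAT i Hi) as [_ [_ Ht]]. apply Rmult_le_pos. left; apply Rinv_0_lt_compat; lra. apply pow2_ge_0.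
  assert (0 <= sumR (nn N) (fun i => sumR (nn N) (fun j => if c i j then (s_th z j - s_th z i)^2 else 0))).
  apply sumR_nonneg. intros. apply sumR_nonneg. intros. destruct (c i i0). apply pow2_ge_0. lra. lra. Qed.

Lemma Hmono x a b : (forall s, a <= s <= b -> solves_at N q Pl c x s) -> a <= b -> HH (x b) <= HH (x a).
Proof. intros H Hab. destruct (Req_dec a b) as [Eab|Eab]. subst; lra.
  destruct (MVT_cor2 (fun s => HH (x s)) (fun s => - DD (x s)) a b) as [c0 [E Hc0]]. lra.
  intros. apply Hderiv. apply H; auto.
  pose proof (DD_nonneg (x c0)). assert (0 <= DD (x c0) * (b - a)) by (apply Rmult_le_pos; lra). lra. Qed.

Lemma HH_xbar : HH xbar = 0.
Proof. unfold HH, Hf, Ubar, xbar. simpl. rewrite !sumR_zero. ring.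
  intros k Hk. unfold edgeU. ring.
  intros. ring.
  intros. unfold thb, thetabar. ring.
  intros. ring. Qed.

Lemma PS_xbar : PS xbar = 0.
Proof. unfold PS, psi, xbar. simpl. rewrite !sumR_zero. ring.
  intros. unfold thb, thetabar. ring. intros. ring. Qed.

Lemma PS_nonneg z : 0 <= PS z.
Proof. unfold PS, psi. assert (0 <= sumR (mm N) (fun k => (s_eta z k - etab k)^2)) by (apply sumR_nonneg; intros; apply pow2_ge_0).
  assert (0 <= sumR (nn N) (fun i => (s_om z i)^2 + (s_V z i - Vb i)^2 + (s_th z i - thb)^2)).
  apply sumR_nonneg; intros. pose proof (pow2_ge_0 (s_om z i)). pose proof (pow2_ge_0 (s_V z i - Vb i)). pose proof (pow2_ge_0 (s_th z i - thb)). lra. lra. Qed.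

Lemma sq_le_abs a r : 0 < r -> a^2 <= r^2 -> Rabs a <= r.
Proof. intros Hr H. apply Rabs_le. destruct (Rle_dec 0 a); split; nra. Qed.

Lemma LB : exists rho mu, 0 < rho <= 1 /\ 0 < mu /\ forall z, PS z <= rho^2 -> HH z >= mu * PS z.
Proof. destruct (Ubar_lb N etab Vb Hw Hs HV Heb HB HP) as [rho [mu [Hr [Hmu H]]]].
  destruct (fin_min (nn N) (Md N)) as [M0 [HM0 HM0i]]. intros i Hi; apply HMAT; auto.
  exists rho, (Rmin mu (Rmin (M0/2) (/2))). split; auto. split. apply Rmin_glb_lt; auto. apply Rmin_glb_lt; lra.
  intros z Hz. set (mu' := Rmin mu (Rmin (M0/2) (/2))).
  assert (Hm1 : mu' <= mu) by apply Rmin_l.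
  assert (Hm2 : mu' <= M0/2) by (eapply Rle_trans; [apply Rmin_r| apply Rmin_l]).
  assert (Hm3 : mu' <= /2) by (eapply Rle_trans; [apply Rmin_r| apply Rmin_r]).
  assert (Hm0 : 0 < mu') by (apply Rmin_glb_lt; auto; apply Rmin_glb_lt; lra).
  unfold PS, psi in Hz.
  set (Sd := sumR (mm N) (fun k => (s_eta z k - etab k)^2)) in *.
  assert (HSd : 0 <= Sd) by (apply sumR_nonneg; intros; apply pow2_ge_0).
  set (Sw := sumR (nn N) (fun i => (s_om z i)^2)). set (Sv := sumR (nn N) (fun i => (s_V z i - Vb i)^2)).
  set (St := sumR (nn N) (fun i => (s_th z i - thb)^2)).
  assert (Esum : sumR (nn N) (fun i => (s_om z i)^2 + (s_V z i - Vb i)^2 + (s_th z i - thb)^2) = Sw + Sv + St).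
  { unfold Sw, Sv, St. rewrite !sumR_plus. auto. }
  rewrite Esum in Hz.
  assert (HSw : 0 <= Sw) by (apply sumR_nonneg; intros; apply pow2_ge_0).
  assert (HSv : 0 <= Sv) by (apply sumR_nonneg; intros; apply pow2_ge_0).
  assert (HSt : 0 <= St) by (apply sumR_nonneg; intros; apply pow2_ge_0).
  assert (HU : Ubar N etab Vb (s_eta z) (s_V z) >= mu * (Sd + Sv)).
  { apply H.
    - intros k Hk. apply sq_le_abs. lra. assert ((s_eta z k - etab k)^2 <= Sd).
      apply (sumR_term _ (fun k => (s_eta z k - etab k)^2)); auto; intros; apply pow2_ge_0. lra.
    - intros i Hi. apply sq_le_abs. lra. assert ((s_V z i - Vb i)^2 <= Sv).
      apply (sumR_term _ (fun i => (s_V z i - Vb i)^2)); auto; intros; apply pow2_ge_0. lra. }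
  assert (HWw : sumR (nn N) (fun i => / 2 * Md N i * s_om z i ^ 2) >= M0/2 * Sw).
  { unfold Sw. rewrite <- sumR_scal. apply Rle_ge, sumR_le. intros i Hi. specialize (HM0i i Hi).
    assert (0 <= s_om z i ^2) by apply pow2_ge_0. nra. }
  assert (HWt : sumR (nn N) (fun i => / 2 * (s_th z i - thb) ^ 2) = /2 * St).
  { unfold St. rewrite <- sumR_scal. auto. }
  unfold HH, Hf. rewrite HWt. unfold PS, psi. fold Sd. rewrite Esum.
  assert (mu' * Sd <= mu * Sd) by (apply Rmult_le_compat_r; auto).
  assert (mu' * Sv <= mu * Sv) by (apply Rmult_le_compat_r; auto).
  assert (mu' * Sw <= M0/2 * Sw) by (apply Rmult_le_compat_r; auto).
  assert (mu' * St <= /2 * St) by (apply Rmult_le_compat_r; auto).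
  lra. Qed.

Lemma region_bnd rho : 0 <= rho -> exists C, forall z, PS z <= rho^2 -> bnd_st N C z.
Proof. intro Hr. destruct (fin_max (mm N) (fun k => Rabs (etab k))) as [Ce [HCe0 HCe]].
  destruct (fin_max (nn N) (fun i => Rabs (Vb i))) as [Cv [HCv0 HCv]].
  exists (Ce + Cv + Rabs thb + rho). intros z Hz. pose proof (Rabs_pos thb).
  assert (A : forall a, a^2 <= rho^2 -> Rabs a <= rho).
  { intros a Ha. destruct (Req_dec rho 0). subst. assert (a = 0) by nra. subst. rewrite Rabs_R0. lra. apply sq_le_abs; lra. }
  assert (T : forall a b, Rabs a <= Rabs b + Rabs (a - b)).
  { intros. replace a with (b + (a - b)) at 1 by ring. apply Rabs_triang. }
  unfold PS, psi in Hz.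
  assert (H1 : 0 <= sumR (mm N) (fun k => (s_eta z k - etab k)^2)) by (apply sumR_nonneg; intros; apply pow2_ge_0).
  assert (Hnode : forall i, (0 <= (s_om z i)^2 + (s_V z i - Vb i)^2 + (s_th z i - thb)^2)).
  { intros. pose proof (pow2_ge_0 (s_om z i)). pose proof (pow2_ge_0 (s_V z i - Vb i)). pose proof (pow2_ge_0 (s_th z i - thb)). lra. }
  assert (H2 : 0 <= sumR (nn N) (fun i => (s_om z i)^2 + (s_V z i - Vb i)^2 + (s_th z i - thb)^2)).
  { apply sumR_nonneg; intros; auto. }
  split.
  - intros k Hk. assert ((s_eta z k - etab k)^2 <= sumR (mm N) (fun k => (s_eta z k - etab k)^2)).
    apply (sumR_term _ (fun k => (s_eta z k - etab k)^2)); auto; intros; apply pow2_ge_0.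
    assert (Rabs (s_eta z k - etab k) <= rho) by (apply A; lra).
    specialize (HCe k Hk). pose proof (T (s_eta z k) (etab k)). lra.
  - intros i Hi. assert (HN : (s_om z i)^2 + (s_V z i - Vb i)^2 + (s_th z i - thb)^2 <= rho^2).
    { assert ((s_om z i)^2 + (s_V z i - Vb i)^2 + (s_th z i - thb)^2 <= sumR (nn N) (fun i => (s_om z i)^2 + (s_V z i - Vb i)^2 + (s_th z i - thb)^2)).
      apply (sumR_term _ (fun i => (s_om z i)^2 + (s_V z i - Vb i)^2 + (s_th z i - thb)^2)); auto. lra. }
    pose proof (pow2_ge_0 (s_om z i)). pose proof (pow2_ge_0 (s_V z i - Vb i)). pose proof (pow2_ge_0 (s_th z i - thb)).
    assert (Rabs (s_om z i) <= rho) by (apply A; lra).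
    assert (Rabs (s_V z i - Vb i) <= rho) by (apply A; lra).
    assert (Rabs (s_th z i - thb) <= rho) by (apply A; lra).
    specialize (HCv i Hi). pose proof (T (s_V z i) (Vb i)). pose proof (T (s_th z i) thb). lra.
Qed.


Lemma nat_above T : exists M : nat, T <= INR M.
Proof. destruct (archimed T) as [Ha _]. destruct (Z_le_gt_dec 0 (up T)).
  exists (Z.to_nat (up T)). rewrite INR_IZR_INZ, Z2Nat.id by auto. lra.
  exists 0%nat. simpl. assert (IZR (up T) <= 0). apply IZR_le. lia. lra. Qed.

Lemma choose_seq t0 (Q : R -> Prop) : (forall T, exists t, T <= t /\ Q t) ->
  exists ts : nat -> R, forall n, t0 + INR n <= ts n /\ Q (ts n).
Proof. intro H. exists (fun n => proj1_sig (constructive_indefinite_description _ (H (t0 + INR n)))).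
  intro n. apply (proj2_sig (constructive_indefinite_description _ (H (t0 + INR n)))). Qed.

Definition clus (x : R -> st) (ts : nat -> R) (y : st) :=
  forall e, 0 < e -> forall M, exists p, (M <= p)%nat /\ sdist N (x (ts p)) y < e.

Lemma confine : exists rho delta, 0 < rho /\ 0 < delta /\ forall x, fwd_sol N q Pl c x -> sdist N (x 0) xbar < delta ->
  exists t0, 0 < t0 /\ forall t, t0 <= t -> PS (x t) < rho^2 /\ 0 <= HH (x t).
Proof. destruct LB as [rho [mu [Hr [Hmu HL]]]].
  assert (Hm : 0 < mu * rho^2) by (apply Rmult_lt_0_compat; auto; nra).
  destruct (contS_Hf N etab Vb thb xbar Hw (mu * rho^2) Hm) as [d1 [Hd1 H1]].
  destruct (contS_psi N etab Vb thb xbar (rho^2) ltac:(nra)) as [d2 [Hd2 H2]].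
  exists rho, (Rmin d1 d2 / 2). split. lra. split. assert (0 < Rmin d1 d2) by (apply Rmin_glb_lt; auto). lra.
  intros x [Hsol Hc0] Hx0.
  assert (0 < Rmin d1 d2 / 2) by (assert (0 < Rmin d1 d2) by (apply Rmin_glb_lt; auto); lra).
  destruct (Hc0 (Rmin d1 d2 / 2) H) as [del [Hdel Hd]].
  set (t0 := del / 2). exists t0. split. unfold t0; lra.
  assert (Hxt0 : sdist N (x t0) xbar < Rmin d1 d2).
  { pose proof (sdist_triang N (x t0) (x 0) xbar). assert (sdist N (x t0) (x 0) < Rmin d1 d2 / 2) by (apply Hd; unfold t0; lra). lra. }
  assert (HH0 : HH (x t0) < mu * rho^2).
  { specialize (H1 (x t0) ltac:(eapply Rlt_le_trans; [apply Hxt0| apply Rmin_l])). fold HH in H1.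
    rewrite HH_xbar in H1. rewrite Rminus_0_r in H1. pose proof (Rle_abs (HH (x t0))). lra. }
  assert (PS0 : PS (x t0) < rho^2).
  { specialize (H2 (x t0) ltac:(eapply Rlt_le_trans; [apply Hxt0| apply Rmin_r])). fold PS in H2.
    rewrite PS_xbar in H2. rewrite Rminus_0_r in H2. pose proof (Rle_abs (PS (x t0))). lra. }
  assert (Hconf : forall t, t0 <= t -> PS (x t) < rho^2).
  { intros t Ht. apply Rnot_le_lt. intro Hge.
    assert (exists s, t0 <= s <= t /\ PS (x s) = rho^2).
    { destruct (Req_dec (PS (x t)) (rho^2)). exists t; split; [lra|auto].
      destruct (IVT_interv (fun s => PS (x s) - rho^2) t0 t) as [s [Hs1 Es]].
      intros a Ha. apply (continuity_pt_minus (fun s => PS (x s)) (fun _ => rho^2)).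
      apply (cont_comp_time N q Pl c x a PS). apply Hsol. unfold t0 in *; lra. apply contS_psi.
      apply continuity_pt_const. intros u v; auto.
      destruct (Req_dec t0 t). subst. lra. lra. lra. lra. exists s. split; auto. lra. }
    destruct H0 as [s [Hs1 Es]].
    assert (HH (x s) <= HH (x t0)). apply Hmono; auto. intros. apply Hsol. unfold t0 in *; lra. lra.
    specialize (HL (x s) ltac:(lra)). rewrite Es in HL. lra. }
  intros t Ht. split. apply Hconf; auto.
  specialize (HL (x t) ltac:(left; apply Hconf; auto)). pose proof (PS_nonneg (x t)).
  assert (0 <= mu * PS (x t)) by (apply Rmult_le_pos; lra). lra.
Qed.

Section Traj.
Variables (x : R -> st) (t0 rho : R).
Hypothesis Hsol : forall t, 0 < t -> solves_at N q Pl c x t.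
Hypothesis Ht0 : 0 < t0.
Hypothesis Hrho : 0 < rho.
Hypothesis Hconf : forall t, t0 <= t -> PS (x t) < rho^2 /\ 0 <= HH (x t).

Lemma L_bnd : exists C, forall t, t0 <= t -> bnd_st N C (x t).
Proof. destruct (region_bnd rho) as [C HC]. lra. exists C. intros t Ht. apply HC. left; apply Hconf; auto. Qed.

Lemma L_speed : exists K, 0 <= K /\ forall t, t0 <= t -> sdist N (rhs N q Pl c (x t)) zst <= K.
Proof. destruct (region_bnd rho) as [C HC]. lra.
  destruct (bounded_on N C (fun z => PS z <= rho^2) (fun z => sdist N (rhs N q Pl c z) zst)) as [K HK].
  auto. intro y. apply contS_speed; auto.
  exists (Rmax K 0). split. apply Rmax_r. intros t Ht. eapply Rle_trans. 2: apply Rmax_l.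
  eapply Rle_trans. apply Rle_abs. apply HK. left; apply Hconf; auto. Qed.

Lemma L_lip : exists L, 0 <= L /\ forall a b, t0 <= a <= b -> sdist N (x b) (x a) <= L * (b - a).
Proof. destruct L_speed as [K [HK0 HK]]. exists ((INR (mm N) + 3 * INR (nn N)) * K). split.
  apply Rmult_le_pos; auto. pose proof (pos_INR (mm N)). pose proof (pos_INR (nn N)). lra.
  intros a b Hab. rewrite Rmult_assoc. apply (traj_lip N q Pl c). lra. intros s Hs1. split. apply Hsol. lra. apply HK. lra. Qed.

Lemma L_cauchy : forall beta, 0 < beta -> exists T, t0 <= T /\ forall a b, T <= a <= b -> HH (x a) - HH (x b) < beta.
Proof. intros beta Hb.
  set (E := fun v => exists t, t0 <= t /\ v = - HH (x t)).
  destruct (completeness E) as [m0 [Hub Hlub]].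
  { exists 0. intros v [t [Ht E1]]. subst. pose proof (proj2 (Hconf t Ht)). lra. }
  { exists (- HH (x t0)). exists t0. split; auto; lra. }
  assert (exists t1, t0 <= t1 /\ m0 - beta < - HH (x t1)).
  { apply NNPP. intro Hn. assert (is_upper_bound E (m0 - beta)).
    { intros v [t [Ht E1]]. subst. apply Rnot_lt_le. intro. apply Hn. exists t. auto. }
    specialize (Hlub _ H). lra. }
  destruct H as [t1 [Ht1 Hm]]. exists t1. split; auto. intros a b Hab.
  assert (HH (x a) <= HH (x t1)). apply Hmono. intros. apply Hsol. lra. lra.
  assert (- HH (x b) <= m0). apply Hub. exists b. split; auto; lra. lra. Qed.

Lemma L_dis ts y : (forall n, t0 + INR n <= ts n) -> clus x ts y -> DD y = 0.
Proof. intros Hts Hcl. pose proof (DD_nonneg y). destruct (Req_dec (DD y) 0) as [E|E]; auto. exfalso.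
  set (d := DD y). assert (Hd : 0 < d) by (unfold d; lra).
  destruct (contS_Dis N c y (d/2) ltac:(lra)) as [r1 [Hr1 H1]].
  destruct L_lip as [L [HL0 HL]].
  set (tau := r1 / (2 * (L + 1))). assert (Htau : 0 < tau) by (unfold tau; apply Rdiv_lt_0_compat; lra).
  assert (HLt : L * tau < r1 / 2).
  { unfold tau. replace (L * (r1 / (2 * (L+1)))) with ((r1/2) * (L / (L+1))) by (field; lra).
    assert (L / (L+1) < 1). apply (Rmult_lt_reg_r (L+1)). lra. unfold Rdiv. rewrite Rmult_assoc, Rinv_l by lra. lra.
    nra. }
  destruct (L_cauchy (d * tau / 2)) as [T [HT HTc]]. nra.
  destruct (nat_above T) as [M HM].
  destruct (Hcl (r1/2) ltac:(lra) M) as [p [Hp Hpy]].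
  set (a := ts p). assert (Ha : T <= a). { unfold a. specialize (Hts p). apply le_INR in Hp. lra. }
  assert (Hin : forall s, a <= s <= a + tau -> d/2 < DD (x s)).
  { intros s Hs1. assert (sdist N (x s) (x a) <= L * (s - a)) by (apply HL; lra).
    assert (L * (s - a) <= L * tau) by (apply Rmult_le_compat_l; lra).
    pose proof (sdist_triang N (x s) (x a) y).
    change (x (ts p)) with (x a) in Hpy. specialize (H1 (x s) ltac:(lra)). apply Rabs_def2 in H1. unfold d, DD in *. lra. }
  destruct (MVT_cor2 (fun s => HH (x s)) (fun s => - DD (x s)) a (a + tau)) as [c0 [E1 Hc0]]. lra.
  intros. apply Hderiv. apply Hsol. lra.
  specialize (Hin c0 ltac:(lra)). specialize (HTc a (a + tau) ltac:(lra)).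
  replace (a + tau - a) with tau in E1 by ring. nra. Qed.

Lemma GEN (P : st -> Prop) : (forall ts y, (forall n, t0 + INR n <= ts n) -> clus x ts y -> P y) ->
  forall e, 0 < e -> exists T, forall t, T <= t -> exists y, P y /\ sdist N (x t) y < e.
Proof. intros HPP e He. apply NNPP. intro Hn.
  assert (Hq' : forall T, exists t, T <= t /\ forall y, P y -> e <= sdist N (x t) y).
  { intro T. apply NNPP. intro Hm. apply Hn. exists T. intros t Ht. apply NNPP. intro Hk. apply Hm. exists t. split; auto.
    intros y Hy. apply Rnot_lt_le. intro. apply Hk. exists y. auto. }
  destruct (choose_seq t0 _ Hq') as [ts Hts].
  destruct L_bnd as [C HC].
  destruct (bw_st N C (fun n => x (ts n))) as [y Hy]. intro n. apply HC. destruct (Hts n) as [H _]. pose proof (pos_INR n). lra.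
  assert (Py : P y). apply (HPP ts y). intro n. apply Hts. intros e' He' M. apply Hy; auto.
  destruct (Hy e He 0%nat) as [p [_ Hp]]. destruct (Hts p) as [_ Hp2]. specialize (Hp2 y Py). lra. Qed.

Lemma GL (F : st -> R) L : (forall y, contS N F y) -> (forall ts y, (forall n, t0 + INR n <= ts n) -> clus x ts y -> F y = L) ->
  forall e, 0 < e -> exists T, forall t, T <= t -> Rabs (F (x t) - L) < e.
Proof. intros HF HPP e He. apply NNPP. intro Hn.
  assert (Hq' : forall T, exists t, T <= t /\ e <= Rabs (F (x t) - L)).
  { intro T. apply NNPP. intro Hm. apply Hn. exists T. intros t Ht. apply Rnot_le_lt. intro. apply Hm. exists t. auto. }
  destruct (choose_seq t0 _ Hq') as [ts Hts].
  destruct L_bnd as [C HC].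
  destruct (bw_st N C (fun n => x (ts n))) as [y Hy]. intro n. apply HC. destruct (Hts n) as [H _]. pose proof (pos_INR n). lra.
  assert (Fy : F y = L). apply (HPP ts y). intro n. apply Hts. intros e' He' M. apply Hy; auto.
  destruct (HF y e He) as [d [Hd Hd2]].
  destruct (Hy d Hd 0%nat) as [p [_ Hp]]. destruct (Hts p) as [_ Hp2]. specialize (Hd2 _ Hp). rewrite Fy in Hd2. lra. Qed.


Lemma sum3_zero a b d : 0 <= a -> 0 <= b -> 0 <= d -> a + b + d = 0 -> a = 0 /\ b = 0 /\ d = 0.
Proof. intros. lra. Qed.

Lemma sumR_zero_term n f i : (forall j, (j < n)%nat -> 0 <= f j) -> sumR n f = 0 -> (i < n)%nat -> f i = 0.
Proof. intros H0 H Hi. pose proof (sumR_term n f i H0 Hi). pose proof (H0 i Hi). lra. Qed.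

Lemma DD_zero y : DD y = 0 -> forall i, (i < nn N)%nat ->
  s_om y i = 0 /\ EV N (s_eta y) (s_V y) i - Efd N i = 0 /\ forall j, (j < nn N)%nat -> c i j = true -> s_th y j = s_th y i.
Proof. intros H i Hi. unfold DD, Dis in H.
  assert (A1 : forall j, (j < nn N)%nat -> 0 <= Ad N j * (s_om y j)^2).
  { intros j Hj. destruct (HMAT j Hj) as [_ [Ha _]]. apply Rmult_le_pos. lra. apply pow2_ge_0. }
  assert (A2 : forall j, (j < nn N)%nat -> 0 <= / Td N j * (EV N (s_eta y) (s_V y) j - Efd N j)^2).
  { intros j Hj. destruct (HMAT j Hj) as [_ [_ Ht]]. apply Rmult_le_pos. left; apply Rinv_0_lt_compat; lra. apply pow2_ge_0. }
  assert (A3 : forall i, (i < nn N)%nat -> 0 <= sumR (nn N) (fun j => if c i j then (s_th y j - s_th y i)^2 else 0)).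
  { intros. apply sumR_nonneg. intros. destruct (c i0 i1). apply pow2_ge_0. lra. }
  assert (A4 : 0 <= / 2 * sumR (nn N) (fun i => sumR (nn N) (fun j => if c i j then (s_th y j - s_th y i)^2 else 0))).
  { apply Rmult_le_pos. left; apply Rinv_0_lt_compat; lra. apply sumR_nonneg; auto. }
  destruct (sum3_zero _ _ _ (sumR_nonneg _ _ A1) (sumR_nonneg _ _ A2) A4 H) as [Z1 [Z2 Z3]].
  destruct (HMAT i Hi) as [_ [Ha Ht]].
  split. pose proof (sumR_zero_term _ _ i A1 Z1 Hi). assert ((s_om y i)^2 = 0).
  apply (Rmult_eq_reg_l (Ad N i)). lra. lra. nra.
  split. pose proof (sumR_zero_term _ _ i A2 Z2 Hi). assert ((EV N (s_eta y) (s_V y) i - Efd N i)^2 = 0).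
  apply (Rmult_eq_reg_l (/ Td N i)). lra. apply Rgt_not_eq, Rinv_0_lt_compat; lra. nra.
  intros j Hj Hcij. assert (Z4 : sumR (nn N) (fun i => sumR (nn N) (fun j => if c i j then (s_th y j - s_th y i)^2 else 0)) = 0) by lra.
  pose proof (sumR_zero_term _ _ i A3 Z4 Hi) as Z5.
  assert (B : forall j, (j < nn N)%nat -> 0 <= (if c i j then (s_th y j - s_th y i)^2 else 0)).
  { intros. destruct (c i j0). apply pow2_ge_0. lra. }
  pose proof (sumR_zero_term _ _ j B Z5 Hj). simpl in H0. rewrite Hcij in H0. nra. Qed.

Lemma sum_DGs V eta : sumR (nn N) (fun i => DGs N V eta i) = 0.
Proof. unfold DGs. rewrite sumR_swap. apply sumR_zero. intros k Hk. destruct (Hw k Hk) as [H1 [H2 H3]].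
  transitivity (sumR (nn N) (fun i => (if i =? src N k then gam N V k * sin (eta k) else 0) + (if i =? dst N k then - (gam N V k * sin (eta k)) else 0))).
  apply sumR_ext. intros i Hi. unfold Dinc. destruct (Nat.eqb_spec i (src N k)); destruct (Nat.eqb_spec i (dst N k)); try lia; ring.
  rewrite sumR_plus, !sumR_delta by auto. ring. Qed.

Lemma conn_eq (th : nat -> R) : (forall i j, (i < nn N)%nat -> (j < nn N)%nat -> c i j = true -> th j = th i) ->
  forall i j, (i < nn N)%nat -> (j < nn N)%nat -> th i = th j.
Proof. intros H i j Hi Hj. pose proof (Hcc i j Hi Hj) as Hr. clear Hi Hj. induction Hr as [a b [Ha [Hb Hab]]| a | a b d _ IH1 _ IH2].
  symmetry. apply H; auto. auto. rewrite IH1. apply IH2. Qed.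

Lemma L_om0 i : (i < nn N)%nat -> forall e, 0 < e -> exists T, forall t, T <= t -> Rabs (s_om (x t) i - 0) < e.
Proof. intro Hi. apply (GL (fun z => s_om z i) 0). intro; apply contS_om; auto.
  intros ts y Hts Hcl. apply (DD_zero y (L_dis ts y Hts Hcl) i Hi). Qed.

Lemma L_G ts y i : (forall n, t0 + INR n <= ts n) -> clus x ts y -> (i < nn N)%nat -> s_om (rhs N q Pl c y) i = 0.
Proof. intros Hts Hcl Hi. set (g := s_om (rhs N q Pl c y) i).
  destruct (Req_dec g 0) as [E|E]; auto. exfalso. assert (Hg : 0 < Rabs g) by (apply Rabs_pos_lt; auto).
  destruct (contS_rhs_om N q Pl c i y Hw Hi (Rabs g / 2) ltac:(lra)) as [r1 [Hr1 H1]].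
  destruct L_lip as [L [HL0 HL]].
  set (tau := r1 / (2 * (L + 1))). assert (Htau : 0 < tau) by (unfold tau; apply Rdiv_lt_0_compat; lra).
  assert (HLt : L * tau < r1 / 2).
  { unfold tau. replace (L * (r1 / (2 * (L+1)))) with ((r1/2) * (L / (L+1))) by (field; lra).
    assert (L / (L+1) < 1). apply (Rmult_lt_reg_r (L+1)). lra. unfold Rdiv. rewrite Rmult_assoc, Rinv_l by lra. lra.
    nra. }
  destruct (L_om0 i Hi (Rabs g * tau / 4)) as [T HT]. nra.
  destruct (nat_above T) as [M HM].
  destruct (Hcl (r1/2) ltac:(lra) M) as [p [Hp Hpy]].
  set (a := ts p). change (x (ts p)) with (x a) in Hpy.
  assert (Ha : T <= a /\ t0 <= a). { unfold a. specialize (Hts p). apply le_INR in Hp. pose proof (pos_INR p). lra. }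
  assert (Hin : forall s, a <= s <= a + tau -> Rabs g / 2 < Rabs (s_om (rhs N q Pl c (x s)) i)).
  { intros s Hs1. assert (sdist N (x s) (x a) <= L * (s - a)) by (apply HL; lra).
    assert (L * (s - a) <= L * tau) by (apply Rmult_le_compat_l; lra).
    pose proof (sdist_triang N (x s) (x a) y).
    specialize (H1 (x s) ltac:(lra)). fold g in H1.
    pose proof (Rabs_triang_inv g (s_om (rhs N q Pl c (x s)) i)). rewrite Rabs_minus_sym in H1. lra. }
  destruct (MVT_cor2 (fun s => s_om (x s) i) (fun s => s_om (rhs N q Pl c (x s)) i) a (a + tau)) as [c0 [E1 Hc0]]. lra.
  intros s Hs1. destruct (Hsol s ltac:(lra)) as [_ Hn]. apply (Hn i Hi).
  specialize (Hin c0 ltac:(lra)). replace (a + tau - a) with tau in E1 by ring.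
  pose proof (HT a ltac:(lra)). pose proof (HT (a + tau) ltac:(lra)). rewrite !Rminus_0_r in *.
  assert (Rabs (s_om (x (a + tau)) i - s_om (x a) i) <= Rabs (s_om (x (a + tau)) i) + Rabs (s_om (x a) i)).
  { unfold Rminus. eapply Rle_trans. apply Rabs_triang. rewrite Rabs_Ropp. lra. }
  rewrite E1, Rabs_mult, (Rabs_right tau) in H2 by lra. nra. Qed.

Lemma L_eqm ts y : (forall n, t0 + INR n <= ts n) -> clus x ts y ->
  Omega N q Pl y /\ (forall k, (k < mm N)%nat -> s_eta (rhs N q Pl c y) k = 0) /\
  (forall i, (i < nn N)%nat -> s_om (rhs N q Pl c y) i = 0 /\ s_V (rhs N q Pl c y) i = 0 /\ s_th (rhs N q Pl c y) i = 0).
Proof. intros Hts Hcl. pose proof (DD_zero y (L_dis ts y Hts Hcl)) as DZ.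
  assert (Hth : forall i j, (i < nn N)%nat -> (j < nn N)%nat -> s_th y i = s_th y j).
  { apply conn_eq. intros i j Hi Hj Hij. apply (DZ i Hi); auto. }
  assert (HG : forall i, (i < nn N)%nat -> / q i * s_th y i - DGs N (s_V y) (s_eta y) i - Pl i = 0).
  { intros i Hi. pose proof (L_G ts y i Hts Hcl Hi) as G. unfold rhs, uctl in G. simpl in G.
    destruct (DZ i Hi) as [Ho _]. rewrite Ho in G. destruct (HMAT i Hi) as [HMi _].
    apply (Rmult_eq_reg_l (/ Md N i)). rewrite Rmult_0_r. rewrite <- G. ring.
    apply Rgt_not_eq, Rinv_0_lt_compat; lra. }
  assert (Hthb : forall i, (i < nn N)%nat -> s_th y i = thetabar (nn N) q Pl i).
  { intros i Hi. set (al := s_th y i).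
    assert (S1 : sumR (nn N) (fun j => / q j * s_th y j - DGs N (s_V y) (s_eta y) j - Pl j) = 0).
    { apply sumR_zero. auto. }
    rewrite !sumR_minus, sum_DGs in S1.
    assert (S2 : sumR (nn N) (fun j => / q j * s_th y j) = al * sumR (nn N) (fun j => / q j)).
    { rewrite <- sumR_scal. apply sumR_ext. intros j Hj. unfold al. rewrite (Hth i j); auto. ring. }
    assert (Qp : 0 < sumR (nn N) (fun j => / q j)).
    { assert (/ q i <= sumR (nn N) (fun j => / q j)). apply (sumR_term _ (fun j => / q j)); auto.
      intros. left; apply Rinv_0_lt_compat; auto. assert (0 < / q i) by (apply Rinv_0_lt_compat; auto). lra. }
    unfold thetabar. apply (Rmult_eq_reg_r (sumR (nn N) (fun j => / q j))). unfold Rdiv. rewrite Rmult_assoc, Rinv_l by lra.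
    fold al. lra. lra. }
  split; [|split].
  - intros i Hi. destruct (DZ i Hi) as [A [B _]]. split; auto.
  - intros k Hk. unfold rhs. simpl. apply sumR_zero. intros i Hi. destruct (DZ i Hi) as [A _]. rewrite A. ring.
  - intros i Hi. destruct (DZ i Hi) as [A [B _]]. split. apply (L_G ts y i); auto. split.
    unfold rhs. simpl. replace (- EV N (s_eta y) (s_V y) i + Efd N i) with (- (EV N (s_eta y) (s_V y) i - Efd N i)) by ring.
    rewrite B. ring.
    unfold rhs. simpl. rewrite A. rewrite sumR_zero. ring. intros j Hj. destruct (c i j); auto. rewrite (Hth j i); auto. ring.
Qed.
End Traj.

Lemma part1 : exists delta, 0 < delta /\ forall x, fwd_sol N q Pl c x -> sdist N (x 0) xbar < delta ->
  converges_to_set N x (largest_invariant N q Pl c (Omega N q Pl)) /\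
  (forall i, (i < nn N)%nat ->
     converges_to (fun t => s_om (x t) i) 0 /\
     converges_to (fun t => uctl q (x t) i) (ubar (nn N) q Pl i)).
Proof. destruct confine as [rho [delta [Hrho [Hd Hconf]]]]. exists delta. split; auto.
  intros x Hx Hx0. destruct (Hconf x Hx Hx0) as [t0 [Ht0 Hcf]]. destruct Hx as [Hsol _].
  split.
  - intros e He. apply (GEN x t0 rho Hrho Hcf); auto.
    intros ts y Hts Hcl. destruct (L_eqm x t0 rho Hsol Ht0 Hrho Hcf ts y Hts Hcl) as [HO [Heta Hnode]].
    exists (fun z => z = y). split; [|split; auto].
    + intros x0 Hx0'. subst x0. exists (fun _ => y). split; [|split; auto].
      intro t. unfold solves_at. simpl. split.
      * intros k Hk. eapply D_ext. apply D_const. exact (eq_sym (Heta k Hk)).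
      * intros i Hi. destruct (Hnode i Hi) as [A [B C]]. split; [|split]; eapply D_ext; try apply D_const.
        exact (eq_sym A). exact (eq_sym B). exact (eq_sym C).
    + intros z Hz. subst. auto.
  - intros i Hi. split.
    + intros e He. apply (L_om0 x t0 rho Hsol Ht0 Hrho Hcf i Hi); auto.
    + intros e He. apply (GL x t0 rho Hrho Hcf (fun z => uctl q z i)); auto.
      intro y. unfold uctl. apply contS_mult. apply contS_const. apply contS_th; auto.
      intros ts y Hts Hcl. destruct (L_eqm x t0 rho Hsol Ht0 Hrho Hcf ts y Hts Hcl) as [HO _].
      destruct (HO i Hi) as [_ [_ Ht]]. unfold uctl, ubar. rewrite Ht. auto.
Qed.
End Main.

Lemma const_of_zero_deriv (f : R -> R) : (forall t, derivable_pt_lim f t 0) -> forall t, f t = f 0.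
Proof. intros H t. destruct (Rtotal_order t 0) as [Hl|[He|Hg]].
  - destruct (MVT_cor2 f (fun _ => 0) t 0) as [c0 [E _]]; auto. lra.
  - subst; auto.
  - destruct (MVT_cor2 f (fun _ => 0) 0 t) as [c0 [E _]]; auto. lra. Qed.

Lemma deriv_zero_fun (f : R -> R) t l : (forall s, f s = 0) -> derivable_pt_lim f t l -> l = 0.
Proof. intros Hf Hd. assert (f = fun _ => 0) by (apply FunctionalExtensionality.functional_extensionality; auto).
  subst. apply (uniqueness_limite (fun _ => 0) t). auto. apply derivable_pt_lim_const. Qed.

Lemma part2 N q Pl c : (forall i, (i < nn N)%nat -> 0 < Md N i /\ 0 < Ad N i /\ 0 < Td N i) ->
  forall x : R -> st, full_sol N q Pl c x -> (forall t, Omega N q Pl (x t)) ->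
         exists etat Vt : nat -> R,
           (forall t k, (k < mm N)%nat -> s_eta (x t) k = etat k) /\
           (forall t i, (i < nn N)%nat -> s_V (x t) i = Vt i) /\
           (forall i, (i < nn N)%nat ->
              0 = ubar (nn N) q Pl i - DGs N Vt etat i - Pl i /\
              0 = - EV N etat Vt i + Efd N i).
Proof. intros HMAT x Hx HO. exists (s_eta (x 0)), (s_V (x 0)). split; [|split].
  - intros t k Hk. apply (const_of_zero_deriv (fun s => s_eta (x s) k)). intro s.
    destruct (Hx s) as [He _]. eapply D_ext. apply He; auto. unfold rhs. simpl. apply sumR_zero. intros i Hi.
    destruct (HO s i Hi) as [A _]. rewrite A. ring.
  - intros t i Hi. apply (const_of_zero_deriv (fun s => s_V (x s) i)). intro s.
    destruct (Hx s) as [_ Hn]. destruct (Hn i Hi) as [_ [HV _]]. eapply D_ext. apply HV. unfold rhs. simpl.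
    destruct (HO s i Hi) as [_ [B _]]. replace (- EV N (s_eta (x s)) (s_V (x s)) i + Efd N i) with (- (EV N (s_eta (x s)) (s_V (x s)) i - Efd N i)) by ring.
    rewrite B. ring.
  - intros i Hi. destruct (HO 0 i Hi) as [A [B C]]. split; [|lra].
    destruct (Hx 0) as [_ Hn]. destruct (Hn i Hi) as [Hom _].
    pose proof (deriv_zero_fun (fun s => s_om (x s) i) 0 _ ltac:(intro s; apply (HO s i Hi)) Hom) as G.
    unfold rhs, uctl in G. simpl in G. rewrite A, C in G. destruct (HMAT i Hi) as [HM _].
    unfold ubar. apply Rmult_integral in G. destruct G as [G|G].
    exfalso. assert (0 < / Md N i) by (apply Rinv_0_lt_compat; lra). lra. lra. Qed.

From Stdlib Require Import Reals.
Open Scope R_scope.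

Theorem theorem2 :
  forall (N : Net) (q Pl : nat -> R) (c : nat -> nat -> bool),
    wf_net N ->
    (forall i, (i < nn N)%nat -> 0 < q i) ->
    (* communication graph: undirected, no self loops, connected *)
    (forall i j, c i j = c j i) -> (forall i, c i i = false) ->
    connected (nn N) c ->
    forall etab Vb : nat -> R,
      (* etab in R(D^T) *)
      (exists phi : nat -> R, forall k, (k < mm N)%nat ->
          etab k = sumR (nn N) (fun i => Dinc N i k * phi i)) ->
      (forall k, (k < mm N)%nat -> - (PI / 2) < etab k < PI / 2) ->
      (forall i, (i < nn N)%nat -> 0 < Vb i) ->
      (forall i, (i < nn N)%nat -> ubar (nn N) q Pl i - Pl i = DGs N Vb etab i) ->
      (forall i, (i < nn N)%nat -> EV N etab Vb i = Efd N i) ->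
      cond_star N etab Vb ->
      let xbar := mkst etab (fun _ => 0) Vb (thetabar (nn N) q Pl) in
      (exists delta, 0 < delta /\
        forall x : R -> st, fwd_sol N q Pl c x -> sdist N (x 0) xbar < delta ->
          converges_to_set N x (largest_invariant N q Pl c (Omega N q Pl)) /\
          (forall i, (i < nn N)%nat ->
             converges_to (fun t => s_om (x t) i) 0 /\
             converges_to (fun t => uctl q (x t) i) (ubar (nn N) q Pl i))) /\
      (* description of the largest invariant set: along any solution
         staying in Omega, eta and V are constant and the equilibrium
         equations hold *)
      (forall x : R -> st, full_sol N q Pl c x -> (forall t, Omega N q Pl (x t)) ->
         exists etat Vt : nat -> R,
           (forall t k, (k < mm N)%nat -> s_eta (x t) k = etat k) /\
           (forall t i, (i < nn N)%nat -> s_V (x t) i = Vt i) /\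
           (forall i, (i < nn N)%nat ->
              0 = ubar (nn N) q Pl i - DGs N Vt etat i - Pl i /\
              0 = - EV N etat Vt i + Efd N i)).
Proof.
  intros N q Pl c HN Hq Hc Hcirr Hcc etab Vb _ Heb HV Hu HE HP xbar.
  destruct HN as [Hw [_ [_ [HBs [_ [_ HMAT]]]]]].
  assert (Hs : sym_edges N) by (intros k Hk; apply HBs; auto).
  assert (HB : forall k, (k < mm N)%nat -> 0 < Bk N k) by (intros k Hk; apply HBs; auto).
  split.
  - apply (part1 N q Pl c etab Vb Hw Hs HB HMAT Hq Hc Hcc Heb HV Hu HE HP).
  - apply part2; auto.
Qed.
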